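(* The algebras $\mathrm{Cl}_q(\mathfrak{sl}_2)$ and $\bigwedge_qV_{2\pi}$, equipped with the Lie derivatives, contractions and differentials described in the context, are quantised $\mathfrak{sl}_2$-differential algebras.
   Context: Fix $q\in\mathbb{C}$ nonzero and not a root of unity. $U_q(\mathfrak{sl}_2)$ is the Hopf algebra generated by $E,F,K,K^{-1}$ with $KE=q^2EK$, $KF=q^{-2}FK$, $KK^{-1}=K^{-1}K=1$, $EF-FE=\frac{K-K^{-1}}{q-q^{-1}}$, coproduct $\Delta E=E\otimes K+1\otimes E$, $\Delta F=F\otimes 1+K^{-1}\otimes F$, $\Delta K^{\pm1}=K^{\pm1}\otimes K^{\pm1}$. $\mathfrak{sl}_q(2)\subset U_q(\mathfrak{sl}_2)$ is the span of $X=E$, $Z=q^{-2}EF-FE$, $Y=KF$, stable under the left adjoint action and isomorphic to the 3-dimensional type 1 simple module $V_{2\pi}$, with basis $v_2=X$, $v_0=Z$, $v_{-2}=Y$. The category of finite-dimensional type 1 modules is braided via the universal $R$-matrix braiding $\sigma$; the normalised braiding is $\tilde\sigma_{V,W}=\sigma_{V,W}\circ(\sigma_{W,V}\circ\sigma_{V,W})^{-1/2}$. The quantum exterior algebra $\bigwedge_qV_{2\pi}=T(V_{2\pi})/\langle v\otimes w+\tilde\sigma(v\otimes w)\rangle$ is generated by odd $v_2,v_0,v_{-2}$ with $v_2\wedge v_2=0=v_{-2}\wedge v_{-2}$, $v_0\wedge v_2=-q^{-2}v_2\wedge v_0$, $v_{-2}\wedge v_0=-q^{-2}v_0\wedge v_{-2}$,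 $v_0\wedge v_0=\frac{1-q^4}{q^3}v_2\wedge v_{-2}$, $v_{-2}\wedge v_2=-v_2\wedge v_{-2}$. Fix a nonzero $c\in\mathbb{C}[q,q^{-1}]$. $\mathrm{Cl}_q(\mathfrak{sl}_2)$ is the filtered superalgebra generated by odd $v_2,v_0,v_{-2}$ with $v_2v_2=0$, $v_{-2}v_{-2}=0$, $v_0v_2=-q^{-2}v_2v_0$, $v_{-2}v_0=-q^{-2}v_0v_{-2}$, $v_0v_0=\frac{1-q^4}{q^3}v_2v_{-2}+\frac{q^2+1}{q}c$, $v_{-2}v_2=-v_2v_{-2}+\frac{q^2+1}{q^2}c$; its associated graded algebra is $\bigwedge_qV_{2\pi}$. Both are $U_q(\mathfrak{sl}_2)$-module algebras with actions $\triangleright$ induced from $V_{2\pi}$. Let $[x,y]_{\tilde\sigma}:=(m-(-1)^{p(x)p(y)}m\circ\tilde\sigma)(x\otimes y)$ on $\mathrm{Cl}_q(\mathfrak{sl}_2)$. Structures on $\mathrm{Cl}_q(\mathfrak{sl}_2)$: $L_x\omega=x\triangleright\omega$ for $x\in U_q(\mathfrak{sl}_2)$; $\iota_x\omega=\frac12[x,\omega]_{\tilde\sigma}$ for $x\in V_{2\pi}$, extended to an action of $\bigwedge_qV_{2\pi}$; $\mathrm{d}_{\mathrm{Cl}_q}\omega=\gamma_q\omega-(-1)^{p(\omega)}\omega\gamma_q$ with $\gamma_q=-\frac{1}{2c^2}(cv_0+v_2v_0v_{-2})$. Structures on $\bigwedge_qV_{2\pi}$: $L_x$ the natural $U_q(\mathfrak{sl}_2)$-action;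 $\iota_x$ the associated graded maps of the contractions on $\mathrm{Cl}_q(\mathfrak{sl}_2)$ (e.g. $\iota_{v_2}v_{-2}=c$, $\iota_{v_0}v_0=q^{-3}(1+q^2)c$, $\iota_{v_{-2}}v_2=q^{-2}c$, other degree-one pairings zero); $\mathrm{d}_{\wedge_q}$ the associated graded of $\mathrm{d}_{\mathrm{Cl}_q}$, which is the graded derivation with $\mathrm{d}_{\wedge_q}v_2=-\frac1cv_2\wedge v_0$, $\mathrm{d}_{\wedge_q}v_0=\frac{1+q^2}{qc}v_2\wedge v_{-2}$, $\mathrm{d}_{\wedge_q}v_{-2}=-\frac1cv_0\wedge v_{-2}$. Definition: a supervector space $W$ is a quantised $\mathfrak{sl}_2$-differential space if it is equipped with (1) Lie derivatives $L_x\in\mathrm{End}(W)$, $x\in U_q(\mathfrak{sl}_2)$, defining a $U_q(\mathfrak{sl}_2)$-module structure; (2) a $U_q(\mathfrak{sl}_2)$-equivariant action $\iota:\bigwedge_qV_{2\pi}\otimes W\to W$; (3) a $U_q(\mathfrak{sl}_2)$-equivariant differential $\mathrm{d}_W:W\to W$ (with $\mathrm{d}_W^2=0$); (4) satisfying $L_x=\iota_x\circ\mathrm{d}_W+\mathrm{d}_W\circ\iota_x$ for $x\in\mathfrak{sl}_q(2)$. An algebra $A$ is a quantised $\mathfrak{sl}_2$-differential algebra if it is such a space with $L_x(ab)=\sum(L_{x_{(1)}}a)(L_{x_{(2)}}b)$ for all $a,b\in A$, $x\in U_q(\mathfrak{sl}_2)$, and $\mathrm{d}_A$ satisfies the graded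 Leibniz rule. *)

(* Defs.v *)
From mathcomp Require Import all_boot all_order all_algebra.
From mathcomp Require Import complex.
From mathcomp Require Import reals.

Set Implicit Arguments.
Unset Strict Implicit.
Unset Printing Implicit Defensive.

Import Order.TTheory GRing.Theory Num.Theory.
Local Open Scope ring_scope.

Section QDiff.
Variable K : fieldType.
Variable q : K.

(* V_{2pi}: basis index 'I_3 : 0 <-> v_2 = X, 1 <-> v_0 = Z, 2 <-> v_{-2} = Y.
   Cl_q / /\_q : basis index 'I_8 of ordered (PBW) monomials
   v_2^a v_0^b v_{-2}^c :
     0 <-> 1,        1 <-> v2,      2 <-> v0,      3 <-> v-2,
     4 <-> v2 v0,    5 <-> v2 v-2,  6 <-> v0 v-2,  7 <-> v2 v0 v-2.       *)

Definition g3 (n : nat) : 'I_3 := inord n.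
Definition i8 (n : nat) : 'I_8 := inord n.

Definition monw (m : 'I_8) : seq 'I_3 :=
  match val m with
  | 0 => [::]
  | 1 => [:: g3 0]
  | 2 => [:: g3 1]
  | 3 => [:: g3 2]
  | 4 => [:: g3 0; g3 1]
  | 5 => [:: g3 0; g3 2]
  | 6 => [:: g3 1; g3 2]
  | _ => [:: g3 0; g3 1; g3 2]
  end.

Definition deg (m : 'I_8) : nat := size (monw m).

(* half-weights: K acts on v_{2j} by q^(2j) *)
Definition hV (g : 'I_3) : int := 1 - (val g)%:Z.
Definition hW (m : 'I_8) : int := \sum_(g <- monw m) hV g.

Definition gen8 (g : 'I_3) : 'I_8 := i8 (val g).+1.

Definition bv (m : 'I_8) : 'cV[K]_8 := delta_mx m 0.
Definition bv3 (g : 'I_3) : 'cV[K]_3 := delta_mx g 0.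

Definition embV (v : 'cV[K]_3) : 'cV[K]_8 := \sum_(g < 3) v g 0 *: bv (gen8 g).

(* The module V_{2pi} = sl_q(2) under the left adjoint action:
   E.X = 0, E.Z = -(q+q^-1) X, E.Y = Z,
   F.X = -Z, F.Z = (q+q^-1) Y, F.Y = 0,   K.v_n = q^n v_n.
   Matrices act on column vectors (M *m v).                              *)
Definition qq := q + q^-1.
Definition VE : 'M[K]_3 :=
  \matrix_(i, j) (if (val i == 0%N) && (val j == 1%N) then - qq
                  else if (val i == 1%N) && (val j == 2%N) then 1 else 0).
Definition VF : 'M[K]_3 :=
  \matrix_(i, j) (if (val i == 1%N) && (val j == 0%N) then -1
                  else if (val i == 2%N) && (val j == 1%N) then qq else 0).
Definition VK : 'M[K]_3 := \matrix_(i, j) ((i == j)%:R * q ^ (2 * hV i)).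
Definition VKi : 'M[K]_3 := \matrix_(i, j) ((i == j)%:R * q ^ (- (2 * hV i))).

(* The algebra Cl_q(sl_2) (parameter c); for c = 0 this is /\_q V_{2pi}.
   lcol c g m = the product v_g * (monomial m) rewritten in the PBW basis
   using the defining relations
     v2 v2 = 0, v-2 v-2 = 0, v0 v2 = -q^-2 v2 v0, v-2 v0 = -q^-2 v0 v-2,
     v0 v0 = ((1-q^4)/q^3) v2 v-2 + ((q^2+1)/q) c,
     v-2 v2 = - v2 v-2 + ((q^2+1)/q^2) c.                               *)
Definition ca := (1 - q ^+ 4) / q ^+ 3.
Definition cb := (q ^+ 2 + 1) / q.
Definition ce := (q ^+ 2 + 1) / q ^+ 2.

Definition lcol (c : K) (g : nat) (m : nat) : seq (K * nat) :=
  match g, m with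
  | 0, 0 => [:: (1, 1%N)]
  | 0, 2 => [:: (1, 4%N)]
  | 0, 3 => [:: (1, 5%N)]
  | 0, 6 => [:: (1, 7%N)]
  | 0, _ => [::]
  | 1, 0 => [:: (1, 2%N)]
  | 1, 1 => [:: (- q ^- 2, 4%N)]
  | 1, 2 => [:: (ca, 5%N); (cb * c, 0%N)]
  | 1, 3 => [:: (1, 6%N)]
  | 1, 4 => [:: (- q ^- 2 * cb * c, 1%N)]
  | 1, 5 => [:: (- q ^- 2, 7%N)]
  | 1, 6 => [:: (cb * c, 3%N)]
  | 1, _ => [:: (- q ^- 2 * cb * c, 5%N)]
  | _, 0 => [:: (1, 3%N)]
  | _, 1 => [:: (-1, 5%N); (ce * c, 0%N)]
  | _, 2 => [:: (- q ^- 2, 6%N)]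
  | _, 4 => [:: (q ^- 2, 7%N); (ce * c, 2%N)]
  | _, 5 => [:: (ce * c, 3%N)]
  | _, 7 => [:: (ce * c, 6%N)]
  | _, _ => [::]
  end.

Definition lmat (c : K) (g : 'I_3) : 'M[K]_8 :=
  \matrix_(i, j) \sum_(p <- lcol c (val g) (val j) | p.2 == val i) p.1.

Definition wmat (c : K) (w : seq 'I_3) : 'M[K]_8 :=
  foldr (fun g M => lmat c g *m M) 1%:M w.

Definition clmul (c : K) (x y : 'cV[K]_8) : 'cV[K]_8 :=
  \sum_(m < 8) x m 0 *: (wmat c (monw m) *m y).

Definition wprod (c : K) (vs : seq 'cV[K]_8) : 'cV[K]_8 :=
  foldr (clmul c) (bv 0) vs.

Definition parity : 'M[K]_8 := \matrix_(i, j) ((i == j)%:R * (-1) ^+ deg i).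

(* U_q(sl_2)-module algebra structure induced from V_{2pi}:
   E(a1...ak) = sum_i a1..a_{i-1} (E a_i) (K a_{i+1})..(K a_k),
   F(a1...ak) = sum_i (K^-1 a1)..(K^-1 a_{i-1}) (F a_i) a_{i+1}..a_k,
   K acts by q^(weight).                                                  *)
Definition gvec (g : 'I_3) : 'cV[K]_8 := bv (gen8 g).

Definition LieEcol (c : K) (m : 'I_8) : 'cV[K]_8 :=
  let w := monw m in
  \sum_(i < size w)
     q ^ (2 * \sum_(h <- drop i.+1 w) hV h) *:
     wprod c (set_nth 0 (map gvec w) i (embV (VE *m bv3 (nth (g3 0) w i)))).

Definition LieFcol (c : K) (m : 'I_8) : 'cV[K]_8 :=
  let w := monw m in
  \sum_(i < size w)
     q ^ (- (2 * \sum_(h <- take i w) hV h)) *: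
     wprod c (set_nth 0 (map gvec w) i (embV (VF *m bv3 (nth (g3 0) w i)))).

Definition LieE (c : K) : 'M[K]_8 := \matrix_(k, m) LieEcol c m k 0.
Definition LieF (c : K) : 'M[K]_8 := \matrix_(k, m) LieFcol c m k 0.
Definition LieK : 'M[K]_8 := \matrix_(i, j) ((i == j)%:R * q ^ (2 * hW i)).
Definition LieKi : 'M[K]_8 := \matrix_(i, j) ((i == j)%:R * q ^ (- (2 * hW i))).

(* Tensor products V_{2pi} (x) W are 'M_(3,8) (v (x) w = v *m w^T), and
   W (x) V_{2pi} are 'M_(8,3).  (A (x) B) X = A *m X *m B^T.          *)
Definition tact {m n} (A : 'M[K]_m) (B : 'M[K]_n) (X : 'M[K]_(m, n)) :=
  A *m X *m B^T.

Definition qint (n : nat) : K := (q ^+ n - q ^- n) / (q - q^-1).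
Definition qfact (n : nat) : K := \prod_(1 <= k < n.+1) qint k.

Section Braiding.
Variables (m n : nat).
Variables (AE AF AK AKi : 'M[K]_m) (BE BF BK BKi : 'M[K]_n).
Variables (hA : 'I_m -> int) (hB : 'I_n -> int).

(* universal R-matrix (Kassel's convention, matching
   Delta E = E (x) K + 1 (x) E, Delta F = F (x) 1 + K^-1 (x) F):
   R = q^(H (x) H / 2) sum_k q^(k(k-1)/2) (q-q^-1)^k/[k]! E^k (x) F^k.
   On type 1 modules of highest weight <= 4 the terms k >= 5 vanish. *)
Definition Rmat (X : 'M[K]_(m, n)) : 'M[K]_(m, n) :=
  let S := \sum_(k < 5)
      (q ^+ 'C(k, 2) * (q - q^-1) ^+ k / qfact k) *: tact (AE ^+ k) (BF ^+ k) X in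
  \matrix_(i, j) (q ^ (2 * hA i * hB j) * S i j).

Definition braid (X : 'M[K]_(m, n)) : 'M[K]_(n, m) := (Rmat X)^T.

Definition tE (X : 'M[K]_(m, n)) := tact AE BK X + tact 1%:M BE X.
Definition tF (X : 'M[K]_(m, n)) := tact AF 1%:M X + tact AKi BF X.
Definition tK (X : 'M[K]_(m, n)) := tact AK BK X.
Definition tKi (X : 'M[K]_(m, n)) := tact AKi BKi X.
End Braiding.

(* Casimir eigenvalue on the simple module of highest weight 2k *)
Definition cval (k : nat) : K :=
  (q ^+ (2 * k).+1 + q ^- (2 * k).+1) / (q - q^-1) ^+ 2.

Definition casimir (M : lmodType K) (fE fF fK fKi : M -> M) (x : M) : M :=
  fE (fF x) + ((q - q^-1) ^+ 2)^-1 *: (q^-1 *: fK x + q *: fKi x).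

(* spectral projector onto the isotypic component of highest weight 2k
   (k < 3), as a polynomial in the Casimir f *)
Definition lagr (M : lmodType K) (f : M -> M) (k : 'I_3) (x : M) : M :=
  foldr (fun (j : 'I_3) y => (cval k - cval j)^-1 *: (f y - cval j *: y)) x
        [seq j <- enum 'I_3 | j != k].

(* theta^(s/2): acts on the component of highest weight 2k by
   q^(s * k(k+1)) = q^(s * (2k)(2k+2)/4)  (s = 1 or -1).
   All modules occurring here have isotypic components of highest
   weights 0, 2, 4 only. *)
Definition thalf (M : lmodType K) (s : int) (f : M -> M) (x : M) : M :=
  \sum_(k < 3) q ^ (s * (k * k.+1)%N%:Z) *: lagr f k x.

Section NormBraid.
Variables (n : nat) (BE BF BK BKi : 'M[K]_n) (hB : 'I_n -> int).
(* normalised braiding on V_{2pi} (x) W: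
   sigma~ = sigma o (sigma_{W,V} sigma_{V,W})^{-1/2}, where
   (sigma_{W,V} sigma_{V,W})^{-1/2} = (theta_V^{1/2} (x) theta_W^{1/2}) theta_{V (x) W}^{-1/2}. *)
Definition thetaV : 'M[K]_3 :=
  thalf 1 (mulmx (casimir (mulmx VE) (mulmx VF) (mulmx VK) (mulmx VKi) 1%:M)) 1%:M.
Definition thetaW : 'M[K]_n :=
  thalf 1 (mulmx (casimir (mulmx BE) (mulmx BF) (mulmx BK) (mulmx BKi) 1%:M)) 1%:M.
Definition Ctens : 'M[K]_(3, n) -> 'M[K]_(3, n) :=
  casimir (tE VE BE BK) (tF VF VKi BF) (tK VK BK) (tKi VKi BKi).
Definition nbraid (X : 'M[K]_(3, n)) : 'M[K]_(n, 3) :=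
  braid VE BF hV hB (tact thetaV thetaW (thalf (-1) Ctens X)).
End NormBraid.

Section Cl.
Variable c : K.

Definition mWV (Y : 'M[K]_(8, 3)) : 'cV[K]_8 :=
  \sum_(i < 8) \sum_(j < 3) Y i j *: clmul c (bv i) (gvec j).

(* iota_x w = 1/2 [x, w]_{sigma~}
           = 1/2 (x w - (-1)^{p(w)} m(sigma~(x (x) w))),   x in V_{2pi} *)
Definition iota1Cl (x : 'cV[K]_3) (w : 'cV[K]_8) : 'cV[K]_8 :=
  2^-1 *: (clmul c (embV x) w
           - mWV (nbraid (LieE c) (LieF c) LieK LieKi hW (x *m (parity *m w)^T))).

Definition IotaGenCl (g : 'I_3) : 'M[K]_8 :=
  \matrix_(k, m) iota1Cl (bv3 g) (bv m) k 0.

Definition iotaExt (G : 'I_3 -> 'M[K]_8) (xi : 'cV[K]_8) : 'M[K]_8 :=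
  \sum_(m < 8) xi m 0 *: foldr (fun g M => G g *m M) 1%:M (monw m).

Definition iotaCl := iotaExt IotaGenCl.

Definition gammaq : 'cV[K]_8 := - (2 * c ^+ 2)^-1 *: (c *: bv (i8 2) + bv (i8 7)).
Definition dCl : 'M[K]_8 :=
  \matrix_(k, m) (clmul c gammaq (bv m) - clmul c (parity *m bv m) gammaq) k 0.

(* associated graded maps on /\_q V (PBW basis = filtration-adapted basis):
   iota_x lowers the degree by one, d raises it by one. *)
Definition IotaGenLam (g : 'I_3) : 'M[K]_8 :=
  \matrix_(k, m) (if (deg k).+1 == deg m then IotaGenCl g k m else 0).
Definition iotaLam := iotaExt IotaGenLam.
Definition dLam : 'M[K]_8 :=
  \matrix_(k, m) (if deg k == (deg m).+1 then dCl k m else 0).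
End Cl.

(* W = 'cV_n; Lie derivatives given by the action of the generators
   E, F, K, K^-1; /\_q V_{2pi} = (K^8, clmul 0) with its natural action
   (LieE 0, LieF 0, LieK, LieKi).                                              *)
Section Def.
Variables (n : nat) (WE WF WK WKi : 'M[K]_n).
Variable (iota : 'cV[K]_8 -> 'M[K]_n) (d : 'M[K]_n).

Definition is_Uq_module : Prop :=
  [/\ WK *m WKi = 1%:M, WKi *m WK = 1%:M,
      WK *m WE = q ^+ 2 *: (WE *m WK), WK *m WF = q ^- 2 *: (WF *m WK)
    & WE *m WF - WF *m WE = (q - q^-1)^-1 *: (WK - WKi)].

Definition is_equiv_action : Prop :=
  [/\ forall (a : K) (xi eta : 'cV[K]_8), iota (a *: xi + eta) = a *: iota xi + iota eta,
      iota (bv 0) = 1%:M,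
      forall xi eta, iota (clmul 0 xi eta) = iota xi *m iota eta
    & forall xi,
      [/\ WE *m iota xi = iota (LieE 0 *m xi) *m WK + iota xi *m WE,
          WF *m iota xi = iota (LieF 0 *m xi) + iota (LieKi *m xi) *m WF,
          WK *m iota xi = iota (LieK *m xi) *m WK
        & WKi *m iota xi = iota (LieKi *m xi) *m WKi]].

Definition is_equiv_differential : Prop :=
  [/\ d *m d = 0, d *m WE = WE *m d, d *m WF = WF *m d,
      d *m WK = WK *m d & d *m WKi = WKi *m d].

(* (4) Cartan formula for x = a X + b Z + e Y in sl_q(2), where
   X = E, Z = q^-2 EF - FE, Y = KF in U_q(sl_2), and x corresponds to
   a v2 + b v0 + e v-2 in V_{2pi}. *)
Definition cartan : Prop :=
  forall a b e : K,
    let Lx := a *: WE + b *: (q ^- 2 *: (WE *m WF) - WF *m WE) + e *: (WK *m WF) in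
    let xi := a *: bv (i8 1) + b *: bv (i8 2) + e *: bv (i8 3) in
    Lx = iota xi *m d + d *m iota xi.

Definition qdiff_space : Prop :=
  [/\ is_Uq_module, is_equiv_action, is_equiv_differential & cartan].

Variables (mulW : 'cV[K]_n -> 'cV[K]_n -> 'cV[K]_n) (parW : 'M[K]_n).

Definition qdiff_algebra : Prop :=
  [/\ qdiff_space,
      forall a b,
      [/\ WE *m mulW a b = mulW (WE *m a) (WK *m b) + mulW a (WE *m b),
          WF *m mulW a b = mulW (WF *m a) b + mulW (WKi *m a) (WF *m b),
          WK *m mulW a b = mulW (WK *m a) (WK *m b)
        & WKi *m mulW a b = mulW (WKi *m a) (WKi *m b)]
    &
      forall a b, d *m mulW a b = mulW (d *m a) b + mulW (parW *m a) (d *m b)].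
End Def.

End QDiff.

(* Main.v *)
Require Import Defs.
From mathcomp Require Import all_boot all_order all_algebra.
From mathcomp Require Import complex.
From mathcomp Require Import reals.
From mathcomp Require Import ring.
Set Implicit Arguments. Unset Strict Implicit. Unset Printing Implicit Defensive.
Import Order.TTheory GRing.Theory Num.Theory.
Local Open Scope ring_scope.

Section Fw.
Variable K : fieldType.
Definition oval (x : option K) : K := if x is Some v then v else 0.
Definition oadd (a b : option K) : option K :=
  match a, b with None, _ => b | _, None => a | Some x, Some y => Some (x + y) end.
Definition omul (a b : option K) : option K :=
  match a, b with Some x, Some y => Some (x * y) | _, _ => None end.
Definition oopp (a : option K) : option K := if a is Some x then Some (- x) else None.
Fixpoint osum (n : nat) (F : nat -> option K) : option K :=
  if n is n'.+1 then oadd (osum n' F) (F n') else None.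
Lemma ovalD a b : oval (oadd a b) = oval a + oval b.
Proof. by case: a; case: b => * /=; rewrite ?addr0 ?add0r. Qed.
Lemma ovalM a b : oval (omul a b) = oval a * oval b.
Proof. by case: a; case: b => * /=; rewrite ?mulr0 ?mul0r. Qed.
Lemma ovalN a : oval (oopp a) = - oval a.
Proof. by case: a => * /=; rewrite ?oppr0. Qed.
Lemma osumE n F : oval (osum n F) = \sum_(j < n) oval (F (nat_of_ord j)).
Proof. elim: n => [|n IH]; first by rewrite big_ord0. by rewrite big_ord_recr /= ovalD IH. Qed.

Definition M m n (f : nat -> nat -> option K) : 'M[K]_(m,n) := \matrix_(i,j) oval (f i j).
Lemma mulM m n p f g : M m n f *m M n p g = M m p (fun i k => osum n (fun j => omul (f i j) (g j k))).
Proof. apply/matrixP => i k; rewrite !mxE osumE; apply: eq_bigr => j _; rewrite !mxE ovalM. done. Qed.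
Lemma addM m n f g : M m n f + M m n g = M m n (fun i j => oadd (f i j) (g i j)).
Proof. by apply/matrixP => i j; rewrite !mxE ovalD. Qed.
Lemma oppM m n f : - M m n f = M m n (fun i j => oopp (f i j)).
Proof. by apply/matrixP => i j; rewrite !mxE ovalN. Qed.
Lemma subM m n f g : M m n f - M m n g = M m n (fun i j => oadd (f i j) (oopp (g i j))).
Proof. by apply/matrixP => i j; rewrite !mxE ovalD ovalN. Qed.
Lemma scaleM m n a f : a *: M m n f = M m n (fun i j => omul (Some a) (f i j)).
Proof. by apply/matrixP => i j; rewrite !mxE ovalM. Qed.
Lemma trM m n f : (M m n f)^T = M n m (fun i j => f j i).
Proof. by apply/matrixP => i j; rewrite !mxE. Qed.
Lemma idM n : (1%:M : 'M[K]_n) = M n n (fun i j => if i == j then Some 1 else None).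
Proof. apply/matrixP => i j; rewrite !mxE; have ->: (nat_of_ord i == nat_of_ord j) = (i == j) by []. by case: (i == j). Qed.
Lemma zeroM m n : (0 : 'M[K]_(m,n)) = M m n (fun _ _ => None).
Proof. by apply/matrixP => i j; rewrite !mxE. Qed.
Lemma Mext m n f g : (forall i j, (i < m)%N -> (j < n)%N -> oval (f i j) = oval (g i j)) -> M m n f = M m n g.
Proof. by move=> H; apply/matrixP => i j; rewrite !mxE H. Qed.
Lemma Mentry m n f (i : 'I_m) (j : 'I_n) : M m n f i j = oval (f i j).
Proof. by rewrite mxE. Qed.
Lemma vecM m n (A : 'M[K]_(m.+1,n.+1)) : A = M m.+1 n.+1 (fun i j => Some (A (inord i) (inord j))).
Proof. by apply/matrixP => i j; rewrite mxE !inord_val. Qed.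
Lemma Msome m n f : M m n f = M m n (fun i j => Some (oval (f i j))).
Proof. by apply/matrixP => i j; rewrite !mxE. Qed.
Lemma nz_eq (x y : K) : y != 0 -> x = y -> x != 0.
Proof. by move=> h ->. Qed.
End Fw.
Arguments M {K} m n f.
Arguments oadd : simpl nomatch.
Arguments inord : simpl never.
Arguments omul : simpl nomatch.
Arguments oopp : simpl nomatch.
Arguments oval : simpl nomatch.
Arguments osum {K} n F.

Ltac c3 i Hi := case: i Hi => [|[|[|i]]] Hi; [| | | by []].
Ltac c8 i Hi := case: i Hi => [|[|[|[|[|[|[|[|i]]]]]]]] Hi; [| | | | | | | | by []].
Ltac c1 i Hi := case: i Hi => [|i] Hi; [| by []].
Ltac synr := lazymatch goal with |- ?a = ?b => constr_eq a b end; reflexivity.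


Section A.
Variable K : fieldType.
Variables q c : K.
Hypothesis q0 : q != 0.
Hypothesis hq2 : q ^+ 2 - 1 != 0.
Ltac nz1 := match goal with
  | H : is_true (?y != 0) |- is_true (?x != 0) => apply: (nz_eq H); ring
  end.
Ltac fld := rewrite /qq /ca /cb /ce; field; rewrite ?mulf_neq0 ?expf_neq0 //; repeat (apply/andP; split); try done; try nz1.
Ltac ent := simpl; first [ synr | fld ].
Ltac gent := simpl; rewrite ?(ovalD, ovalM, ovalN) /=; fld.

Lemma g3v n : (n < 3)%N -> nat_of_ord (g3 n) = n. Proof. by move=> h; rewrite /g3 inordK. Qed.
Lemma i8v n : (n < 8)%N -> nat_of_ord (i8 n) = n. Proof. by move=> h; rewrite /i8 inordK. Qed.
Lemma bvE (m : 'I_8) : bv K m = M 8 1 (fun i _ => if i == m then Some 1 else None).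
Proof. apply/matrixP => i j; rewrite !mxE; case: j => [[|//] ?] /=; rewrite andbT; have ->: (nat_of_ord i == nat_of_ord m) = (i == m) by []. by case: (i == m). Qed.
Lemma bv3E (m : 'I_3) : bv3 K m = M 3 1 (fun i _ => if i == m then Some 1 else None).
Proof. apply/matrixP => i j; rewrite !mxE; case: j => [[|//] ?] /=; rewrite andbT; have ->: (nat_of_ord i == nat_of_ord m) = (i == m) by []. by case: (i == m). Qed.
Lemma gvecE (g : 'I_3) : gvec K g = M 8 1 (fun i _ => if i == (nat_of_ord g).+1 then Some 1 else None).
Proof. rewrite /gvec /gen8 bvE i8v //; by case: g => [[|[|[|]]] ?]. Qed.
Lemma VEE : VE q = M 3 3 (fun i j => if (i == 0%N) && (j == 1%N) then Some (- qq q)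
                  else if (i == 1%N) && (j == 2%N) then Some 1 else None).
Proof. by apply/matrixP => i j; rewrite !mxE; case: i => [[|[|[|]]] ?]; case: j => [[|[|[|]]] ?]. Qed.
Lemma VFE : VF q = M 3 3 (fun i j => if (i == 1%N) && (j == 0%N) then Some (-1)
                  else if (i == 2%N) && (j == 1%N) then Some (qq q) else None).
Proof. by apply/matrixP => i j; rewrite !mxE; case: i => [[|[|[|]]] ?]; case: j => [[|[|[|]]] ?]. Qed.
Definition VKd (i : nat) : K := match i with 0 => q ^+ 2 | 1 => 1 | _ => q ^- 2 end.
Definition VKid (i : nat) : K := match i with 0 => q ^- 2 | 1 => 1 | _ => q ^+ 2 end.
Lemma VKE : VK q = M 3 3 (fun i j => if i == j then Some (VKd i) else None).
Proof.
apply/matrixP => i j; rewrite !mxE.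
by case: i => [[|[|[|]]] ?]; case: j => [[|[|[|]]] ?] //=; rewrite /hV /= ?expr0z ?mul1r ?mul0r.
Qed.
Lemma VKiE : VKi q = M 3 3 (fun i j => if i == j then Some (VKid i) else None).
Proof.
apply/matrixP => i j; rewrite !mxE.
by case: i => [[|[|[|]]] ?]; case: j => [[|[|[|]]] ?] //=; rewrite /hV /= ?expr0z ?mul1r ?mul0r.
Qed.
Lemma hVg n : (n < 3)%N -> hV (g3 n) = 1 - n%:Z.
Proof. by move=> h; rewrite /hV; congr (_ - _%:Z); exact: g3v. Qed.
Lemma qzE (z : int) : q ^ z = match z with Posz n => q ^+ n | Negz n => q ^- n.+1 end.
Proof. by case: z. Qed.
Definition LMt (g i j : nat) : option K :=
  match g, i, j with
  | 0, 1, 0 => Some (1%:R)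
  | 0, 4, 2 => Some (1%:R)
  | 0, 5, 3 => Some (1%:R)
  | 0, 7, 6 => Some (1%:R)
  | 1, 0, 2 => Some (q ^- 1 * c + q * c)
  | 1, 1, 4 => Some (- q ^- 3 * c - q ^- 1 * c)
  | 1, 2, 0 => Some (1%:R)
  | 1, 3, 6 => Some (q ^- 1 * c + q * c)
  | 1, 4, 1 => Some (- q ^- 2)
  | 1, 5, 2 => Some (q ^- 3 - q)
  | 1, 5, 7 => Some (- q ^- 3 * c - q ^- 1 * c)
  | 1, 6, 3 => Some (1%:R)
  | 1, 7, 5 => Some (- q ^- 2)
  | 2, 0, 1 => Some (q ^- 2 * c + c)
  | 2, 2, 4 => Some (q ^- 2 * c + c)
  | 2, 3, 0 => Some (1%:R)
  | 2, 3, 5 => Some (q ^- 2 * c + c)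
  | 2, 5, 1 => Some (- 1%:R)
  | 2, 6, 2 => Some (- q ^- 2)
  | 2, 6, 7 => Some (q ^- 2 * c + c)
  | 2, 7, 4 => Some (q ^- 2)
  | _, _, _ => None end.

Definition Wt (m i j : nat) : option K :=
  match m, i, j with
  | 0, 0, 0 => Some (1%:R)
  | 0, 1, 1 => Some (1%:R)
  | 0, 2, 2 => Some (1%:R)
  | 0, 3, 3 => Some (1%:R)
  | 0, 4, 4 => Some (1%:R)
  | 0, 5, 5 => Some (1%:R)
  | 0, 6, 6 => Some (1%:R)
  | 0, 7, 7 => Some (1%:R)
  | 1, 1, 0 => Some (1%:R)
  | 1, 4, 2 => Some (1%:R)
  | 1, 5, 3 => Some (1%:R)
  | 1, 7, 6 => Some (1%:R)
  | 2, 0, 2 => Some (q ^- 1 * c + q * c)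
  | 2, 1, 4 => Some (- q ^- 3 * c - q ^- 1 * c)
  | 2, 2, 0 => Some (1%:R)
  | 2, 3, 6 => Some (q ^- 1 * c + q * c)
  | 2, 4, 1 => Some (- q ^- 2)
  | 2, 5, 2 => Some (q ^- 3 - q)
  | 2, 5, 7 => Some (- q ^- 3 * c - q ^- 1 * c)
  | 2, 6, 3 => Some (1%:R)
  | 2, 7, 5 => Some (- q ^- 2)
  | 3, 0, 1 => Some (q ^- 2 * c + c)
  | 3, 2, 4 => Some (q ^- 2 * c + c)
  | 3, 3, 0 => Some (1%:R)
  | 3, 3, 5 => Some (q ^- 2 * c + c)
  | 3, 5, 1 => Some (- 1%:R)
  | 3, 6, 2 => Some (- q ^- 2)
  | 3, 6, 7 => Some (q ^- 2 * c + c)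
  | 3, 7, 4 => Some (q ^- 2)
  | 4, 1, 2 => Some (q ^- 1 * c + q * c)
  | 4, 4, 0 => Some (1%:R)
  | 4, 5, 6 => Some (q ^- 1 * c + q * c)
  | 4, 7, 3 => Some (1%:R)
  | 5, 1, 1 => Some (q ^- 2 * c + c)
  | 5, 4, 4 => Some (q ^- 2 * c + c)
  | 5, 5, 0 => Some (1%:R)
  | 5, 5, 5 => Some (q ^- 2 * c + c)
  | 5, 7, 2 => Some (- q ^- 2)
  | 5, 7, 7 => Some (q ^- 2 * c + c)
  | 6, 0, 4 => Some (q ^- 3 * c ^+ 2 + 2%:R * q ^- 1 * c ^+ 2 + q * c ^+ 2)
  | 6, 2, 1 => Some (q ^- 2 * c + c)
  | 6, 3, 2 => Some (- q ^- 3 * c - q ^- 1 * c)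
  | 6, 3, 7 => Some (q ^- 3 * c ^+ 2 + 2%:R * q ^- 1 * c ^+ 2 + q * c ^+ 2)
  | 6, 5, 4 => Some (- q ^- 1 * c - q * c)
  | 6, 6, 0 => Some (1%:R)
  | 6, 6, 5 => Some (q ^- 2 * c + c)
  | 6, 7, 1 => Some (q ^- 2)
  | 7, 1, 4 => Some (q ^- 3 * c ^+ 2 + 2%:R * q ^- 1 * c ^+ 2 + q * c ^+ 2)
  | 7, 4, 1 => Some (q ^- 2 * c + c)
  | 7, 5, 2 => Some (- q ^- 3 * c - q ^- 1 * c)
  | 7, 5, 7 => Some (q ^- 3 * c ^+ 2 + 2%:R * q ^- 1 * c ^+ 2 + q * c ^+ 2)
  | 7, 7, 0 => Some (1%:R)
  | 7, 7, 5 => Some (q ^- 2 * c + c)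
  | _, _, _ => None end.

Definition CLt (f g : nat -> nat -> option K) (i j : nat) : option K :=
  match i, j with
  | 0, 0 => oadd (omul (Some (1%:R)) (omul (f 0%N 0%N) (g 0%N 0%N))) (oadd (omul (Some (q ^- 1 * c + q * c)) (omul (f 2%N 0%N) (g 2%N 0%N))) (oadd (omul (Some (q ^- 2 * c + c)) (omul (f 3%N 0%N) (g 1%N 0%N))) (omul (Some (q ^- 3 * c ^+ 2 + 2%:R * q ^- 1 * c ^+ 2 + q * c ^+ 2)) (omul (f 6%N 0%N) (g 4%N 0%N)))))
  | 1, 0 => oadd (omul (Some (1%:R)) (omul (f 0%N 0%N) (g 1%N 0%N))) (oadd (omul (Some (1%:R)) (omul (f 1%N 0%N) (g 0%N 0%N))) (oadd (omul (Some (- q ^- 3 * c - q ^- 1 * c)) (omul (f 2%N 0%N) (g 4%N 0%N))) (oadd (omul (Some (q ^- 1 * c + q * c)) (omul (f 4%N 0%N) (g 2%N 0%N))) (oadd (omul (Some (q ^- 2 * c + c)) (omul (f 5%N 0%N) (g 1%N 0%N))) (omul (Some (q ^- 3 * c ^+ 2 + 2%:R * q ^- 1 * c ^+ 2 + q * c ^+ 2)) (omul (f 7%N 0%N) (g 4%N 0%N)))))))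
  | 2, 0 => oadd (omul (Some (1%:R)) (omul (f 0%N 0%N) (g 2%N 0%N))) (oadd (omul (Some (1%:R)) (omul (f 2%N 0%N) (g 0%N 0%N))) (oadd (omul (Some (q ^- 2 * c + c)) (omul (f 3%N 0%N) (g 4%N 0%N))) (omul (Some (q ^- 2 * c + c)) (omul (f 6%N 0%N) (g 1%N 0%N)))))
  | 3, 0 => oadd (omul (Some (1%:R)) (omul (f 0%N 0%N) (g 3%N 0%N))) (oadd (omul (Some (q ^- 1 * c + q * c)) (omul (f 2%N 0%N) (g 6%N 0%N))) (oadd (omul (Some (1%:R)) (omul (f 3%N 0%N) (g 0%N 0%N))) (oadd (omul (Some (q ^- 2 * c + c)) (omul (f 3%N 0%N) (g 5%N 0%N))) (oadd (omul (Some (- q ^- 3 * c - q ^- 1 * c)) (omul (f 6%N 0%N) (g 2%N 0%N))) (omul (Some (q ^- 3 * c ^+ 2 + 2%:R * q ^- 1 * c ^+ 2 + q * c ^+ 2)) (omul (f 6%N 0%N) (g 7%N 0%N)))))))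
  | 4, 0 => oadd (omul (Some (1%:R)) (omul (f 0%N 0%N) (g 4%N 0%N))) (oadd (omul (Some (1%:R)) (omul (f 1%N 0%N) (g 2%N 0%N))) (oadd (omul (Some (- q ^- 2)) (omul (f 2%N 0%N) (g 1%N 0%N))) (oadd (omul (Some (1%:R)) (omul (f 4%N 0%N) (g 0%N 0%N))) (oadd (omul (Some (q ^- 2 * c + c)) (omul (f 5%N 0%N) (g 4%N 0%N))) (omul (Some (q ^- 2 * c + c)) (omul (f 7%N 0%N) (g 1%N 0%N)))))))
  | 5, 0 => oadd (omul (Some (1%:R)) (omul (f 0%N 0%N) (g 5%N 0%N))) (oadd (omul (Some (1%:R)) (omul (f 1%N 0%N) (g 3%N 0%N))) (oadd (omul (Some (q ^- 3 - q)) (omul (f 2%N 0%N) (g 2%N 0%N))) (oadd (omul (Some (- q ^- 3 * c - q ^- 1 * c)) (omul (f 2%N 0%N) (g 7%N 0%N))) (oadd (omul (Some (- 1%:R)) (omul (f 3%N 0%N) (g 1%N 0%N))) (oadd (omul (Some (q ^- 1 * c + q * c)) (omul (f 4%N 0%N) (g 6%N 0%N))) (oadd (omul (Some (1%:R)) (omul (f 5%N 0%N) (g 0%N 0%N))) (oadd (omul (Some (q ^- 2 * c + c)) (omul (f 5%N 0%N) (g 5%N 0%N))) (oadd (omul (Some (- q ^- 1 * c - q * c)) (omul (f 6%N 0%N) (g 4%N 0%N))) (oadd (omul (Some (- q ^- 3 * c - q ^- 1 * c)) (omul (f 7%N 0%N) (g 2%N 0%N))) (omul (Some (q ^- 3 *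 c ^+ 2 + 2%:R * q ^- 1 * c ^+ 2 + q * c ^+ 2)) (omul (f 7%N 0%N) (g 7%N 0%N))))))))))))
  | 6, 0 => oadd (omul (Some (1%:R)) (omul (f 0%N 0%N) (g 6%N 0%N))) (oadd (omul (Some (1%:R)) (omul (f 2%N 0%N) (g 3%N 0%N))) (oadd (omul (Some (- q ^- 2)) (omul (f 3%N 0%N) (g 2%N 0%N))) (oadd (omul (Some (q ^- 2 * c + c)) (omul (f 3%N 0%N) (g 7%N 0%N))) (oadd (omul (Some (1%:R)) (omul (f 6%N 0%N) (g 0%N 0%N))) (omul (Some (q ^- 2 * c + c)) (omul (f 6%N 0%N) (g 5%N 0%N)))))))
  | 7, 0 => oadd (omul (Some (1%:R)) (omul (f 0%N 0%N) (g 7%N 0%N))) (oadd (omul (Some (1%:R)) (omul (f 1%N 0%N) (g 6%N 0%N))) (oadd (omul (Some (- q ^- 2)) (omul (f 2%N 0%N) (g 5%N 0%N))) (oadd (omul (Some (q ^- 2)) (omul (f 3%N 0%N) (g 4%N 0%N))) (oadd (omul (Some (1%:R)) (omul (f 4%N 0%N) (g 3%N 0%N))) (oadd (omul (Some (- q ^- 2)) (omul (f 5%N 0%N) (g 2%N 0%N))) (oadd (omul (Some (q ^- 2 * c + c)) (omul (f 5%N 0%N) (g 7%N 0%N))) (oadd (omul (Some (q ^- 2)) (omul (f 6%N 0%N) (g 1%N 0%N))) (oadd (omul (Some (1%:R)) (omul (f 7%N 0%N) (g 0%N 0%N))) (omul (Some (q ^- 2 * c + c)) (omul (f 7%N 0%N)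 (g 5%N 0%N)))))))))))
  | _, _ => None end.

Definition LEt (i j : nat) : option K :=
  match i, j with
  | 0, 6 => Some (q ^- 1 * c + q * c)
  | 1, 2 => Some (- q ^- 1 - q)
  | 1, 7 => Some (q ^- 1 * c + q * c)
  | 2, 3 => Some (1%:R)
  | 4, 5 => Some (1%:R)
  | 5, 6 => Some (- q ^- 1 - q)
  | _, _ => None end.

Definition LFt (i j : nat) : option K :=
  match i, j with
  | 0, 4 => Some (- q ^- 1 * c - q * c)
  | 2, 1 => Some (- 1%:R)
  | 3, 2 => Some (q ^- 1 + q)
  | 3, 7 => Some (- q ^- 1 * c - q * c)
  | 5, 4 => Some (q ^- 1 + q)
  | 6, 5 => Some (- 1%:R)
  | _, _ => None end.

Definition LKt (i j : nat) : option K :=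
  match i, j with
  | 0, 0 => Some (1%:R)
  | 1, 1 => Some (q ^+ 2)
  | 2, 2 => Some (1%:R)
  | 3, 3 => Some (q ^- 2)
  | 4, 4 => Some (q ^+ 2)
  | 5, 5 => Some (1%:R)
  | 6, 6 => Some (q ^- 2)
  | 7, 7 => Some (1%:R)
  | _, _ => None end.

Definition LKit (i j : nat) : option K :=
  match i, j with
  | 0, 0 => Some (1%:R)
  | 1, 1 => Some (q ^- 2)
  | 2, 2 => Some (1%:R)
  | 3, 3 => Some (q ^+ 2)
  | 4, 4 => Some (q ^- 2)
  | 5, 5 => Some (1%:R)
  | 6, 6 => Some (q ^+ 2)
  | 7, 7 => Some (1%:R)
  | _, _ => None end.

Lemma lmatE (g : 'I_3) : lmat q c g = M 8 8 (LMt (nat_of_ord g)).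
Proof.
apply/matrixP => i j; rewrite !mxE.
case: g => [[|[|[|g]]] Hg] //; case: j => [[|[|[|[|[|[|[|[|j]]]]]]]] Hj] //=;
  rewrite ?big_cons ?big_nil /=;
  case: i => [[|[|[|[|[|[|[|[|i]]]]]]]] Hi] //=; rewrite ?addr0; ent.
Qed.
Lemma wmat6 : wmat q c [:: g3 1; g3 2] = M 8 8 (Wt 6).
Proof.
rewrite /wmat /= !lmatE !g3v // idM !mulM.
apply: Mext => i j Hi Hj; c8 i Hi; c8 j Hj; ent.
Qed.
Lemma wmatE (m : 'I_8) : wmat q c (monw m) = M 8 8 (Wt (nat_of_ord m)).
Proof.
case: m => [[|[|[|[|[|[|[|[|m]]]]]]]] Hm] //; rewrite /monw /=; last first.
  change (lmat q c (g3 0) *m wmat q c [:: g3 1; g3 2] = M 8 8 (Wt 7)).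
  rewrite wmat6 lmatE g3v // mulM; apply: Mext => i j Hi Hj; c8 i Hi; c8 j Hj; ent.
all: rewrite /wmat /= ?lmatE ?g3v // idM ?mulM; apply: Mext => i j Hi Hj; c8 i Hi; c8 j Hj; ent.
Qed.
Lemma clmulS (x y : nat -> nat -> K) : clmul q c (M 8 1 (fun i j => Some (x i j))) (M 8 1 (fun i j => Some (y i j)))
   = M 8 1 (CLt (fun i j => Some (x i j)) (fun i j => Some (y i j))).
Proof.
rewrite /clmul !big_ord_recr big_ord0 !Mentry !wmatE /= add0r !mulM !scaleM !addM.
apply: Mext => i j Hi Hj; c8 i Hi; c1 j Hj; ent.
Qed.
Lemma clmulE f g : clmul q c (M 8 1 f) (M 8 1 g) = M 8 1 (CLt f g).
Proof.
rewrite [M 8 1 f]Msome [M 8 1 g]Msome clmulS.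
apply: Mext => i j Hi Hj; c8 i Hi; c1 j Hj; gent.
Qed.
Lemma embVE (f : nat -> nat -> option K) : embV (M 3 1 f) = M 8 1 (fun i _ => match i with 1 => f 0%N 0%N | 2 => f 1%N 0%N | 3 => f 2%N 0%N | _ => None end).
Proof.
rewrite /embV !big_ord_recr big_ord0 /= !Mentry /gen8 !bvE !i8v // !scaleM add0r !addM.
by apply: Mext => i j Hi Hj; c8 i Hi; gent.
Qed.
Lemma LEE : LieE q c = M 8 8 LEt.
Proof.
apply/matrixP => k m; rewrite !mxE.
case: m => [[|[|[|[|[|[|[|[|m]]]]]]]] Hm] //; rewrite /LieEcol /= ?big_ord_recr big_ord0 /= ?big_cons ?big_nil /wprod /= ?hVg // ?add0r ?qzE /=.
all: rewrite ?VEE ?bv3E ?gvecE ?bvE ?g3v // ?mulM ?embVE ?clmulE ?scaleM ?addM ?Mentry ?mxE.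
all: case: k => [k Hk] /=; c8 k Hk; ent.
Qed.
Lemma LFE : LieF q c = M 8 8 LFt.
Proof.
apply/matrixP => k m; rewrite !mxE.
case: m => [[|[|[|[|[|[|[|[|m]]]]]]]] Hm] //; rewrite /LieFcol /= ?big_ord_recr big_ord0 /= ?big_cons ?big_nil /wprod /= ?hVg // ?add0r ?qzE /=.
all: rewrite ?VFE ?bv3E ?gvecE ?bvE ?g3v // ?mulM ?embVE ?clmulE ?scaleM ?addM ?Mentry ?mxE.
all: case: k => [k Hk] /=; c8 k Hk; ent.
Qed.
Lemma LKE : LieK q = M 8 8 LKt.
Proof.
apply/matrixP => i j; rewrite !mxE /hW.
case: i => [[|[|[|[|[|[|[|[|i]]]]]]]] Hi] //=; rewrite ?big_cons ?big_nil ?hVg // ?qzE /=;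
case: j => [j Hj] /=; c8 j Hj; ent.
Qed.
Lemma LKiE : LieKi q = M 8 8 LKit.
Proof.
apply/matrixP => i j; rewrite !mxE /hW.
case: i => [[|[|[|[|[|[|[|[|i]]]]]]]] Hi] //=; rewrite ?big_cons ?big_nil ?hVg // ?qzE /=;
case: j => [j Hj] /=; c8 j Hj; ent.
Qed.
Lemma modrel : is_Uq_module q (LieE q c) (LieF q c) (LieK q) (LieKi q).
Proof.
rewrite /is_Uq_module LEE LFE LKE LKiE idM ?(mulM, scaleM, subM, addM).
split; apply: Mext => i j Hi Hj; c8 i Hi; c8 j Hj; ent.
Qed.
Lemma modalg : forall a b : 'cV[K]_8,
      [/\ LieE q c *m clmul q c a b = clmul q c (LieE q c *m a) (LieK q *m b) + clmul q c a (LieE q c *m b),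
          LieF q c *m clmul q c a b = clmul q c (LieF q c *m a) b + clmul q c (LieKi q *m a) (LieF q c *m b),
          LieK q *m clmul q c a b = clmul q c (LieK q *m a) (LieK q *m b)
        & LieKi q *m clmul q c a b = clmul q c (LieKi q *m a) (LieKi q *m b)].
Proof.
move=> a b; rewrite [a]vecM [b]vecM LEE LFE LKE LKiE ?(clmulE, mulM, addM).
split; apply: Mext => i j Hi Hj; c8 i Hi; c1 j Hj; ent.
Qed.
End A.


Section B.
Variable K : fieldType.
Variables q c : K.
Hypothesis q0 : q != 0.
Hypothesis hq2 : q ^+ 2 - 1 != 0.
Hypothesis hP1 : q - 1 != 0.
Hypothesis hP2 : q + 1 != 0.
Hypothesis hP3 : q ^+ 2 + q + 1 != 0.
Hypothesis hP4 : q ^+ 2 + 1 != 0.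
Hypothesis hP6 : q ^+ 2 - q + 1 != 0.
Hypothesis hP8 : q ^+ 4 + 1 != 0.
Hypothesis two0 : (2%:R : K) != 0.
Ltac nz1 := match goal with
  | H : is_true (?y != 0) |- is_true (?x != 0) => apply: (nz_eq H); ring
  end.
Ltac nzs := repeat (first [ apply/andP; split | apply: mulf_neq0 | apply: expf_neq0 | rewrite oppr_eq0 | exact: oner_neq0 | done ]); try nz1.
Ltac fld := rewrite /qq /ca /cb /ce /cval; field; nzs.
Ltac ent := simpl; rewrite ?qzE /=; first [ synr | fld ].

Let LEE' := LEE c q0.
Let LFE' := LFE c q0.
Let LKE' := LKE q0.
Let LKiE' := LKiE q0.
Let clmulE' := clmulE c q0.

Lemma enum3 : enum 'I_3 = [:: ord0; Ordinal (isT : (1 < 3)%N); Ordinal (isT : (2 < 3)%N)].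
Proof. by apply: (inj_map val_inj); rewrite val_enum_ord. Qed.

Lemma thalfE (V : lmodType K) s (f : V -> V) (x : V) :
  thalf q s f x =
    q ^ (s * 0%:Z) *: ((cval q 0 - cval q 1)^-1 *: (f ((cval q 0 - cval q 2)^-1 *: (f x - cval q 2 *: x))
                    - cval q 1 *: ((cval q 0 - cval q 2)^-1 *: (f x - cval q 2 *: x))))
  + q ^ (s * 2%:Z) *: ((cval q 1 - cval q 0)^-1 *: (f ((cval q 1 - cval q 2)^-1 *: (f x - cval q 2 *: x))
                    - cval q 0 *: ((cval q 1 - cval q 2)^-1 *: (f x - cval q 2 *: x))))
  + q ^ (s * 6%:Z) *: ((cval q 2 - cval q 0)^-1 *: (f ((cval q 2 - cval q 1)^-1 *: (f x - cval q 1 *: x))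
                    - cval q 0 *: ((cval q 2 - cval q 1)^-1 *: (f x - cval q 1 *: x)))).
Proof. by rewrite /thalf /lagr enum3 !big_ord_recr big_ord0 /= add0r. Qed.

Lemma cvd01 : (cval q 0 - cval q 1)^-1 = - q / (q ^+ 2 + 1).
Proof. have h : cval q 0 - cval q 1 = - (q ^+ 2 + 1) / q by fld. rewrite h; fld. Qed.
Lemma cvd10 : (cval q 1 - cval q 0)^-1 = q / (q ^+ 2 + 1).
Proof. have h : cval q 1 - cval q 0 = (q ^+ 2 + 1) / q by fld. rewrite h; fld. Qed.
Lemma cvd02 : (cval q 0 - cval q 2)^-1 = - q ^+ 3 / ((q ^+ 2 + q + 1) * (q ^+ 2 + 1) * (q ^+ 2 - q + 1)).
Proof. have h : cval q 0 - cval q 2 = - ((q ^+ 2 + q + 1) * (q ^+ 2 + 1) * (q ^+ 2 - q + 1)) / q ^+ 3 by fld. rewrite h; fld. Qed.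
Lemma cvd20 : (cval q 2 - cval q 0)^-1 = q ^+ 3 / ((q ^+ 2 + q + 1) * (q ^+ 2 + 1) * (q ^+ 2 - q + 1)).
Proof. have h : cval q 2 - cval q 0 = ((q ^+ 2 + q + 1) * (q ^+ 2 + 1) * (q ^+ 2 - q + 1)) / q ^+ 3 by fld. rewrite h; fld. Qed.
Lemma cvd12 : (cval q 1 - cval q 2)^-1 = - q ^+ 3 / ((q ^+ 2 + 1) * (q ^+ 4 + 1)).
Proof. have h : cval q 1 - cval q 2 = - ((q ^+ 2 + 1) * (q ^+ 4 + 1)) / q ^+ 3 by fld. rewrite h; fld. Qed.
Lemma cvd21 : (cval q 2 - cval q 1)^-1 = q ^+ 3 / ((q ^+ 2 + 1) * (q ^+ 4 + 1)).
Proof. have h : cval q 2 - cval q 1 = ((q ^+ 2 + 1) * (q ^+ 4 + 1)) / q ^+ 3 by fld. rewrite h; fld. Qed.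
Definition TFt (x : nat -> nat -> K) (i j : nat) : option K :=
  match i, j with
  | 0, 0 => Some ((- q ^- 3 * c - q ^- 1 * c) * x 0%N 4%N)
  | 0, 2 => Some ((- q ^- 2) * x 0%N 1%N)
  | 0, 3 => Some ((q ^- 3 + q ^- 1) * x 0%N 2%N + (- q ^- 3 * c - q ^- 1 * c) * x 0%N 7%N)
  | 0, 5 => Some ((q ^- 3 + q ^- 1) * x 0%N 4%N)
  | 0, 6 => Some ((- q ^- 2) * x 0%N 5%N)
  | 1, 0 => Some ((- 1%:R) * x 0%N 0%N + (- q ^- 1 * c - q * c) * x 1%N 4%N)
  | 1, 1 => Some ((- 1%:R) * x 0%N 1%N)
  | 1, 2 => Some ((- 1%:R) * x 0%N 2%N + (- 1%:R) * x 1%N 1%N)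
  | 1, 3 => Some ((- 1%:R) * x 0%N 3%N + (q ^- 1 + q) * x 1%N 2%N + (- q ^- 1 * c - q * c) * x 1%N 7%N)
  | 1, 4 => Some ((- 1%:R) * x 0%N 4%N)
  | 1, 5 => Some ((- 1%:R) * x 0%N 5%N + (q ^- 1 + q) * x 1%N 4%N)
  | 1, 6 => Some ((- 1%:R) * x 0%N 6%N + (- 1%:R) * x 1%N 5%N)
  | 1, 7 => Some ((- 1%:R) * x 0%N 7%N)
  | 2, 0 => Some ((q ^- 1 + q) * x 1%N 0%N + (- q * c - q ^+ 3 * c) * x 2%N 4%N)
  | 2, 1 => Some ((q ^- 1 + q) * x 1%N 1%N)
  | 2, 2 => Some ((q ^- 1 + q) * x 1%N 2%N + (- q ^+ 2) * x 2%N 1%N)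
  | 2, 3 => Some ((q ^- 1 + q) * x 1%N 3%N + (q + q ^+ 3) * x 2%N 2%N + (- q * c - q ^+ 3 * c) * x 2%N 7%N)
  | 2, 4 => Some ((q ^- 1 + q) * x 1%N 4%N)
  | 2, 5 => Some ((q ^- 1 + q) * x 1%N 5%N + (q + q ^+ 3) * x 2%N 4%N)
  | 2, 6 => Some ((q ^- 1 + q) * x 1%N 6%N + (- q ^+ 2) * x 2%N 5%N)
  | 2, 7 => Some ((q ^- 1 + q) * x 1%N 7%N)
  | _, _ => None end.

Definition TEt (x : nat -> nat -> K) (i j : nat) : option K :=
  match i, j with
  | 0, 0 => Some ((q ^- 1 * c + q * c) * x 0%N 6%N + (- q ^- 1 - q) * x 1%N 0%N)
  | 0, 1 => Some ((- q ^- 1 - q) * x 0%N 2%N + (q ^- 1 * c + q * c) * x 0%N 7%N + (- q - q ^+ 3) * x 1%N 1%N)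
  | 0, 2 => Some ((1%:R) * x 0%N 3%N + (- q ^- 1 - q) * x 1%N 2%N)
  | 0, 3 => Some ((- q ^- 3 - q ^- 1) * x 1%N 3%N)
  | 0, 4 => Some ((1%:R) * x 0%N 5%N + (- q - q ^+ 3) * x 1%N 4%N)
  | 0, 5 => Some ((- q ^- 1 - q) * x 0%N 6%N + (- q ^- 1 - q) * x 1%N 5%N)
  | 0, 6 => Some ((- q ^- 3 - q ^- 1) * x 1%N 6%N)
  | 0, 7 => Some ((- q ^- 1 - q) * x 1%N 7%N)
  | 1, 0 => Some ((q ^- 1 * c + q * c) * x 1%N 6%N + (1%:R) * x 2%N 0%N)
  | 1, 1 => Some ((- q ^- 1 - q) * x 1%N 2%N + (q ^- 1 * c + q * c) * x 1%N 7%N + (q ^+ 2) * x 2%N 1%N)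
  | 1, 2 => Some ((1%:R) * x 1%N 3%N + (1%:R) * x 2%N 2%N)
  | 1, 3 => Some ((q ^- 2) * x 2%N 3%N)
  | 1, 4 => Some ((1%:R) * x 1%N 5%N + (q ^+ 2) * x 2%N 4%N)
  | 1, 5 => Some ((- q ^- 1 - q) * x 1%N 6%N + (1%:R) * x 2%N 5%N)
  | 1, 6 => Some ((q ^- 2) * x 2%N 6%N)
  | 1, 7 => Some ((1%:R) * x 2%N 7%N)
  | 2, 0 => Some ((q ^- 1 * c + q * c) * x 2%N 6%N)
  | 2, 1 => Some ((- q ^- 1 - q) * x 2%N 2%N + (q ^- 1 * c + q * c) * x 2%N 7%N)
  | 2, 2 => Some ((1%:R) * x 2%N 3%N)
  | 2, 4 => Some ((1%:R) * x 2%N 5%N)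
  | 2, 5 => Some ((- q ^- 1 - q) * x 2%N 6%N)
  | _, _ => None end.

Definition TKt (x : nat -> nat -> K) (i j : nat) : option K :=
  match i, j with
  | 0, 0 => Some ((q ^+ 2) * x 0%N 0%N)
  | 0, 1 => Some ((q ^+ 4) * x 0%N 1%N)
  | 0, 2 => Some ((q ^+ 2) * x 0%N 2%N)
  | 0, 3 => Some ((1%:R) * x 0%N 3%N)
  | 0, 4 => Some ((q ^+ 4) * x 0%N 4%N)
  | 0, 5 => Some ((q ^+ 2) * x 0%N 5%N)
  | 0, 6 => Some ((1%:R) * x 0%N 6%N)
  | 0, 7 => Some ((q ^+ 2) * x 0%N 7%N)
  | 1, 0 => Some ((1%:R) * x 1%N 0%N)
  | 1, 1 => Some ((q ^+ 2) * x 1%N 1%N)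
  | 1, 2 => Some ((1%:R) * x 1%N 2%N)
  | 1, 3 => Some ((q ^- 2) * x 1%N 3%N)
  | 1, 4 => Some ((q ^+ 2) * x 1%N 4%N)
  | 1, 5 => Some ((1%:R) * x 1%N 5%N)
  | 1, 6 => Some ((q ^- 2) * x 1%N 6%N)
  | 1, 7 => Some ((1%:R) * x 1%N 7%N)
  | 2, 0 => Some ((q ^- 2) * x 2%N 0%N)
  | 2, 1 => Some ((1%:R) * x 2%N 1%N)
  | 2, 2 => Some ((q ^- 2) * x 2%N 2%N)
  | 2, 3 => Some ((q ^- 4) * x 2%N 3%N)
  | 2, 4 => Some ((1%:R) * x 2%N 4%N)
  | 2, 5 => Some ((q ^- 2) * x 2%N 5%N)
  | 2, 6 => Some ((q ^- 4) * x 2%N 6%N)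
  | 2, 7 => Some ((q ^- 2) * x 2%N 7%N)
  | _, _ => None end.

Definition TKit (x : nat -> nat -> K) (i j : nat) : option K :=
  match i, j with
  | 0, 0 => Some ((q ^- 2) * x 0%N 0%N)
  | 0, 1 => Some ((q ^- 4) * x 0%N 1%N)
  | 0, 2 => Some ((q ^- 2) * x 0%N 2%N)
  | 0, 3 => Some ((1%:R) * x 0%N 3%N)
  | 0, 4 => Some ((q ^- 4) * x 0%N 4%N)
  | 0, 5 => Some ((q ^- 2) * x 0%N 5%N)
  | 0, 6 => Some ((1%:R) * x 0%N 6%N)
  | 0, 7 => Some ((q ^- 2) * x 0%N 7%N)
  | 1, 0 => Some ((1%:R) * x 1%N 0%N)
  | 1, 1 => Some ((q ^- 2) * x 1%N 1%N)
  | 1, 2 => Some ((1%:R) * x 1%N 2%N)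
  | 1, 3 => Some ((q ^+ 2) * x 1%N 3%N)
  | 1, 4 => Some ((q ^- 2) * x 1%N 4%N)
  | 1, 5 => Some ((1%:R) * x 1%N 5%N)
  | 1, 6 => Some ((q ^+ 2) * x 1%N 6%N)
  | 1, 7 => Some ((1%:R) * x 1%N 7%N)
  | 2, 0 => Some ((q ^+ 2) * x 2%N 0%N)
  | 2, 1 => Some ((1%:R) * x 2%N 1%N)
  | 2, 2 => Some ((q ^+ 2) * x 2%N 2%N)
  | 2, 3 => Some ((q ^+ 4) * x 2%N 3%N)
  | 2, 4 => Some ((1%:R) * x 2%N 4%N)
  | 2, 5 => Some ((q ^+ 2) * x 2%N 5%N)
  | 2, 6 => Some ((q ^+ 4) * x 2%N 6%N)
  | 2, 7 => Some ((q ^+ 2) * x 2%N 7%N)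
  | _, _ => None end.

Definition CTt (x : nat -> nat -> K) (i j : nat) : option K :=
  match i, j with
  | 0, 0 => Some (((q ^- 1 + q ^+ 5) / ((- 1%:R + q) ^+ 2 * (1%:R + q) ^+ 2)) * x 0%N 0%N + (- q ^- 3 * c - q ^- 1 * c) * x 0%N 5%N + (q ^- 2 * c + 2%:R * c + q ^+ 2 * c) * x 1%N 4%N)
  | 0, 1 => Some (((q ^- 3 + q ^+ 7) / ((- 1%:R + q) ^+ 2 * (1%:R + q) ^+ 2)) * x 0%N 1%N)
  | 0, 2 => Some (((q ^- 3 - q + q ^+ 3 + q ^+ 5) / ((- 1%:R + q) ^+ 2 * (1%:R + q) ^+ 2)) * x 0%N 2%N + (- q ^- 3 * c - q ^- 1 * c) * x 0%N 7%N + (q ^- 1 + q) * x 1%N 1%N)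
  | 0, 3 => Some (((q ^- 3 - q ^- 1 + 2%:R * q ^+ 3) / ((- 1%:R + q) ^+ 2 * (1%:R + q) ^+ 2)) * x 0%N 3%N + (- q ^- 4 - 2%:R * q ^- 2 - 1%:R) * x 1%N 2%N + (q ^- 4 * c + 2%:R * q ^- 2 * c + c) * x 1%N 7%N)
  | 0, 4 => Some (((q ^- 3 + q ^+ 7) / ((- 1%:R + q) ^+ 2 * (1%:R + q) ^+ 2)) * x 0%N 4%N)
  | 0, 5 => Some (((q ^- 3 - q + q ^+ 3 + q ^+ 5) / ((- 1%:R + q) ^+ 2 * (1%:R + q) ^+ 2)) * x 0%N 5%N + (- q ^- 2 - 2%:R - q ^+ 2) * x 1%N 4%N)
  | 0, 6 => Some (((q ^- 3 - q ^- 1 + 2%:R * q ^+ 3) / ((- 1%:R + q) ^+ 2 * (1%:R + q) ^+ 2)) * x 0%N 6%N + (q ^- 3 + q ^- 1) * x 1%N 5%N)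
  | 0, 7 => Some (((q ^- 1 + q ^+ 5) / ((- 1%:R + q) ^+ 2 * (1%:R + q) ^+ 2)) * x 0%N 7%N)
  | 1, 0 => Some ((- q ^- 1 * c - q * c) * x 0%N 6%N + ((q ^- 1 + q ^+ 5) / ((- 1%:R + q) ^+ 2 * (1%:R + q) ^+ 2)) * x 1%N 0%N + (- q ^- 1 * c - q * c) * x 1%N 5%N + (- q * c - q ^+ 3 * c) * x 2%N 4%N)
  | 1, 1 => Some ((q ^- 1 + q) * x 0%N 2%N + (- q ^- 1 * c - q * c) * x 0%N 7%N + ((q ^- 1 + q - q ^+ 3 + q ^+ 7) / ((- 1%:R + q) ^+ 2 * (1%:R + q) ^+ 2)) * x 1%N 1%N)
  | 1, 2 => Some ((- 1%:R) * x 0%N 3%N + ((2%:R * q ^- 1 - q - q ^+ 3 + 2%:R * q ^+ 5) / ((- 1%:R + q) ^+ 2 * (1%:R + q) ^+ 2)) * x 1%N 2%N + (- q ^- 1 * c - q * c) * x 1%N 7%N + (- q ^+ 2) * x 2%N 1%N)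
  | 1, 3 => Some (((q ^- 3 - q + q ^+ 3 + q ^+ 5) / ((- 1%:R + q) ^+ 2 * (1%:R + q) ^+ 2)) * x 1%N 3%N + (q ^- 1 + q) * x 2%N 2%N + (- q ^- 1 * c - q * c) * x 2%N 7%N)
  | 1, 4 => Some ((- 1%:R) * x 0%N 5%N + ((q ^- 1 + q - q ^+ 3 + q ^+ 7) / ((- 1%:R + q) ^+ 2 * (1%:R + q) ^+ 2)) * x 1%N 4%N)
  | 1, 5 => Some ((q ^- 1 + q) * x 0%N 6%N + ((2%:R * q ^- 1 - q - q ^+ 3 + 2%:R * q ^+ 5) / ((- 1%:R + q) ^+ 2 * (1%:R + q) ^+ 2)) * x 1%N 5%N + (q + q ^+ 3) * x 2%N 4%N)
  | 1, 6 => Some (((q ^- 3 - q + q ^+ 3 + q ^+ 5) / ((- 1%:R + q) ^+ 2 * (1%:R + q) ^+ 2)) * x 1%N 6%N + (- 1%:R) * x 2%N 5%N)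
  | 1, 7 => Some (((q ^- 1 + q ^+ 5) / ((- 1%:R + q) ^+ 2 * (1%:R + q) ^+ 2)) * x 1%N 7%N)
  | 2, 0 => Some ((q ^- 2 * c + 2%:R * c + q ^+ 2 * c) * x 1%N 6%N + ((q ^- 1 + q ^+ 5) / ((- 1%:R + q) ^+ 2 * (1%:R + q) ^+ 2)) * x 2%N 0%N + (- q * c - q ^+ 3 * c) * x 2%N 5%N)
  | 2, 1 => Some ((- q ^- 2 - 2%:R - q ^+ 2) * x 1%N 2%N + (q ^- 2 * c + 2%:R * c + q ^+ 2 * c) * x 1%N 7%N + ((2%:R * q - q ^+ 5 + q ^+ 7) / ((- 1%:R + q) ^+ 2 * (1%:R + q) ^+ 2)) * x 2%N 1%N)
  | 2, 2 => Some ((q ^- 1 + q) * x 1%N 3%N + ((q ^- 1 + q - q ^+ 3 + q ^+ 7) / ((- 1%:R + q) ^+ 2 * (1%:R + q) ^+ 2)) * x 2%N 2%N + (- q * c - q ^+ 3 * c) * x 2%N 7%N)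
  | 2, 3 => Some (((q ^- 3 + q ^+ 7) / ((- 1%:R + q) ^+ 2 * (1%:R + q) ^+ 2)) * x 2%N 3%N)
  | 2, 4 => Some ((q ^- 1 + q) * x 1%N 5%N + ((2%:R * q - q ^+ 5 + q ^+ 7) / ((- 1%:R + q) ^+ 2 * (1%:R + q) ^+ 2)) * x 2%N 4%N)
  | 2, 5 => Some ((- q ^- 2 - 2%:R - q ^+ 2) * x 1%N 6%N + ((q ^- 1 + q - q ^+ 3 + q ^+ 7) / ((- 1%:R + q) ^+ 2 * (1%:R + q) ^+ 2)) * x 2%N 5%N)
  | 2, 6 => Some (((q ^- 3 + q ^+ 7) / ((- 1%:R + q) ^+ 2 * (1%:R + q) ^+ 2)) * x 2%N 6%N)
  | 2, 7 => Some (((q ^- 1 + q ^+ 5) / ((- 1%:R + q) ^+ 2 * (1%:R + q) ^+ 2)) * x 2%N 7%N)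
  | _, _ => None end.

Definition THt (x : nat -> nat -> K) (i j : nat) : option K :=
  match i, j with
  | 0, 0 => Some ((q ^- 2) * x 0%N 0%N + ((- q ^- 6 * c + q ^- 2 * c) / ((1%:R + q ^+ 4))) * x 0%N 5%N + ((q ^- 5 * c + q ^- 3 * c - q ^- 1 * c - q * c) / ((1%:R + q ^+ 4))) * x 1%N 4%N)
  | 0, 1 => Some ((q ^- 6) * x 0%N 1%N)
  | 0, 2 => Some (((q ^- 6 + q ^+ 2) / ((1%:R + q ^+ 4))) * x 0%N 2%N + ((- q ^- 6 * c + q ^- 2 * c) / ((1%:R + q ^+ 4))) * x 0%N 7%N + ((q ^- 4 - 1%:R) / ((1%:R + q ^+ 4))) * x 1%N 1%N)
  | 0, 3 => Some (((q ^- 6 - q ^- 4 + 2%:R - q ^+ 2 + q ^+ 4) / ((1%:R + q ^+ 4))) * x 0%N 3%N + ((- q ^- 7 - q ^- 5 + 2%:R * q ^- 3 - q + q ^+ 3) / ((1%:R + q ^+ 4))) * x 1%N 2%N + ((q ^- 7 * c + q ^- 5 * c - 2%:R * q ^- 3 * c + q * c - q ^+ 3 * c) / ((1%:R + q ^+ 4))) * x 1%N 7%N + ((q ^- 2 - 2%:R + q ^+ 2) / ((1%:R + q ^+ 4))) * x 2%N 1%N)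
  | 0, 4 => Some ((q ^- 6) * x 0%N 4%N)
  | 0, 5 => Some (((q ^- 6 + q ^+ 2) / ((1%:R + q ^+ 4))) * x 0%N 5%N + ((- q ^- 5 - q ^- 3 + q ^- 1 + q) / ((1%:R + q ^+ 4))) * x 1%N 4%N)
  | 0, 6 => Some (((q ^- 6 - q ^- 4 + 2%:R - q ^+ 2 + q ^+ 4) / ((1%:R + q ^+ 4))) * x 0%N 6%N + ((q ^- 6 - 2%:R * q ^- 2 + 2%:R - q ^+ 2) / ((1%:R + q ^+ 4))) * x 1%N 5%N + ((q ^- 2 - 2%:R + q ^+ 2) / ((1%:R + q ^+ 4))) * x 2%N 4%N)
  | 0, 7 => Some ((q ^- 2) * x 0%N 7%N)
  | 1, 0 => Some (((- q ^- 4 * c + 2%:R * c - 2%:R * q ^+ 2 * c + q ^+ 4 * c) / ((1%:R + q ^+ 4))) * x 0%N 6%N + (q ^- 2) * x 1%N 0%N + ((- q ^- 4 * c - q ^- 2 * c + 3%:R * c - q ^+ 2 * c) / ((1%:R + q ^+ 4))) * x 1%N 5%N + ((- 2%:R * c + 2%:R * q ^+ 2 * c) / ((1%:R + q ^+ 4))) * x 2%N 4%N)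
  | 1, 1 => Some (((q ^- 4 - 1%:R) / ((1%:R + q ^+ 4))) * x 0%N 2%N + ((- q ^- 4 * c + c) / ((1%:R + q ^+ 4))) * x 0%N 7%N + ((2%:R * q ^- 2) / ((1%:R + q ^+ 4))) * x 1%N 1%N)
  | 1, 2 => Some (((- q ^- 3 + 2%:R * q - 2%:R * q ^+ 3 + q ^+ 5) / ((1%:R + q ^+ 2) * (1%:R + q ^+ 4))) * x 0%N 3%N + ((q ^- 4 + 2%:R * q ^- 2 - 3%:R + 2%:R * q ^+ 2) / ((1%:R + q ^+ 4))) * x 1%N 2%N + ((- q ^- 4 * c - q ^- 2 * c + 3%:R * c - q ^+ 2 * c) / ((1%:R + q ^+ 4))) * x 1%N 7%N + ((- 2%:R * q + 2%:R * q ^+ 3) / ((1%:R + q ^+ 2) * (1%:R + q ^+ 4))) * x 2%N 1%N)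
  | 1, 3 => Some (((q ^- 6 + q ^+ 2) / ((1%:R + q ^+ 4))) * x 1%N 3%N + ((q ^- 4 - 1%:R) / ((1%:R + q ^+ 4))) * x 2%N 2%N + ((- q ^- 4 * c + c) / ((1%:R + q ^+ 4))) * x 2%N 7%N)
  | 1, 4 => Some (((- q ^- 3 + q ^- 1) / ((1%:R + q ^+ 4))) * x 0%N 5%N + ((2%:R * q ^- 2) / ((1%:R + q ^+ 4))) * x 1%N 4%N)
  | 1, 5 => Some (((q ^- 4 - 2%:R + 2%:R * q ^+ 2 - q ^+ 4) / ((1%:R + q ^+ 4))) * x 0%N 6%N + ((q ^- 4 + 2%:R * q ^- 2 - 3%:R + 2%:R * q ^+ 2) / ((1%:R + q ^+ 4))) * x 1%N 5%N + ((2%:R - 2%:R * q ^+ 2) / ((1%:R + q ^+ 4))) * x 2%N 4%N)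
  | 1, 6 => Some (((q ^- 6 + q ^+ 2) / ((1%:R + q ^+ 4))) * x 1%N 6%N + ((- q ^- 3 + q ^- 1) / ((1%:R + q ^+ 4))) * x 2%N 5%N)
  | 1, 7 => Some ((q ^- 2) * x 1%N 7%N)
  | 2, 0 => Some (((q ^- 5 * c + q ^- 3 * c - q ^- 1 * c - q * c) / ((1%:R + q ^+ 4))) * x 1%N 6%N + (q ^- 2) * x 2%N 0%N + ((- q ^- 2 * c + q ^+ 2 * c) / ((1%:R + q ^+ 4))) * x 2%N 5%N)
  | 2, 1 => Some (((q ^- 2 - 2%:R + q ^+ 2) / ((1%:R + q ^+ 4))) * x 0%N 3%N + ((- 2%:R * q ^- 3 + 2%:R * q) / ((1%:R + q ^+ 4))) * x 1%N 2%N + ((2%:R * q ^- 3 * c - 2%:R * q * c) / ((1%:R + q ^+ 4))) * x 1%N 7%N + ((2%:R) / ((1%:R + q ^+ 4))) * x 2%N 1%N)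
  | 2, 2 => Some (((q ^- 4 - 1%:R) / ((1%:R + q ^+ 4))) * x 1%N 3%N + ((2%:R * q ^- 2) / ((1%:R + q ^+ 4))) * x 2%N 2%N + ((- q ^- 2 * c + q ^+ 2 * c) / ((1%:R + q ^+ 4))) * x 2%N 7%N)
  | 2, 3 => Some ((q ^- 6) * x 2%N 3%N)
  | 2, 4 => Some (((q ^- 2 - 2%:R + q ^+ 2) / ((1%:R + q ^+ 4))) * x 0%N 6%N + ((2%:R * q ^- 2 - 2%:R) / ((1%:R + q ^+ 4))) * x 1%N 5%N + ((2%:R) / ((1%:R + q ^+ 4))) * x 2%N 4%N)
  | 2, 5 => Some (((- q ^- 5 - q ^- 3 + q ^- 1 + q) / ((1%:R + q ^+ 4))) * x 1%N 6%N + ((2%:R * q ^- 2) / ((1%:R + q ^+ 4))) * x 2%N 5%N)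
  | 2, 6 => Some ((q ^- 6) * x 2%N 6%N)
  | 2, 7 => Some ((q ^- 2) * x 2%N 7%N)
  | _, _ => None end.

Lemma TFE f : tF (VF q) (VKi q) (LieF q c) (M 3 8 f) = M 3 8 (TFt (fun i j => oval (f i j))).
Proof.
rewrite /tF /tact VFE VKiE LFE' idM [M 3 8 f]Msome ?(mulM, trM, addM).
apply: Mext => i j Hi Hj; c3 i Hi; c8 j Hj; ent.
Qed.
Lemma TEE f : tE (VE q) (LieE q c) (LieK q) (M 3 8 f) = M 3 8 (TEt (fun i j => oval (f i j))).
Proof.
rewrite /tE /tact VEE LEE' LKE' idM [M 3 8 f]Msome ?(mulM, trM, addM).
apply: Mext => i j Hi Hj; c3 i Hi; c8 j Hj; ent.
Qed.
Lemma TKE f : tK (VK q) (LieK q) (M 3 8 f) = M 3 8 (TKt (fun i j => oval (f i j))).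
Proof.
rewrite /tK /tact VKE LKE' [M 3 8 f]Msome ?(mulM, trM, addM).
apply: Mext => i j Hi Hj; c3 i Hi; c8 j Hj; ent.
Qed.
Lemma TKiE f : tKi (VKi q) (LieKi q) (M 3 8 f) = M 3 8 (TKit (fun i j => oval (f i j))).
Proof.
rewrite /tKi /tact VKiE LKiE' [M 3 8 f]Msome ?(mulM, trM, addM).
apply: Mext => i j Hi Hj; c3 i Hi; c8 j Hj; ent.
Qed.
Lemma CTE f : Ctens q (LieE q c) (LieF q c) (LieK q) (LieKi q) (M 3 8 f) = M 3 8 (CTt (fun i j => oval (f i j))).
Proof.
rewrite /Ctens /casimir TFE TEE TKE TKiE ?(scaleM, addM).
apply: Mext => i j Hi Hj; c3 i Hi; c8 j Hj; ent.
Qed.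
Lemma THE f : thalf q (-1) (Ctens q (LieE q c) (LieF q c) (LieK q) (LieKi q)) (M 3 8 f) = M 3 8 (THt (fun i j => oval (f i j))).
Proof.
rewrite thalfE cvd01 cvd02 cvd12 cvd10 cvd20 cvd21.
rewrite [M 3 8 f]Msome ?(CTE, scaleM, subM, addM).
apply: Mext => i j Hi Hj; c3 i Hi; c8 j Hj; ent.
Qed.
Definition CVt (i j : nat) : option K :=
  match i, j with
  | 0, 0 => Some ((q ^- 1 + q ^+ 5) / ((- 1%:R + q) ^+ 2 * (1%:R + q) ^+ 2))
  | 1, 1 => Some ((q ^- 1 + q ^+ 5) / ((- 1%:R + q) ^+ 2 * (1%:R + q) ^+ 2))
  | 2, 2 => Some ((q ^- 1 + q ^+ 5) / ((- 1%:R + q) ^+ 2 * (1%:R + q) ^+ 2))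
  | _, _ => None end.

Definition TVt (i j : nat) : option K :=
  match i, j with
  | 0, 0 => Some (q ^+ 2)
  | 1, 1 => Some (q ^+ 2)
  | 2, 2 => Some (q ^+ 2)
  | _, _ => None end.

Definition CWt (i j : nat) : option K :=
  match i, j with
  | 0, 0 => Some ((q + q ^+ 3) / ((- 1%:R + q) ^+ 2 * (1%:R + q) ^+ 2))
  | 0, 5 => Some (- q ^- 1 * c - q * c)
  | 1, 1 => Some ((q ^- 1 + q ^+ 5) / ((- 1%:R + q) ^+ 2 * (1%:R + q) ^+ 2))
  | 2, 2 => Some ((q ^- 1 + q ^+ 5) / ((- 1%:R + q) ^+ 2 * (1%:R + q) ^+ 2))
  | 2, 7 => Some (- q ^- 1 * c - q * c)
  | 3, 3 => Some ((q ^- 1 + q ^+ 5) / ((- 1%:R + q) ^+ 2 * (1%:R + q) ^+ 2))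
  | 4, 4 => Some ((q ^- 1 + q ^+ 5) / ((- 1%:R + q) ^+ 2 * (1%:R + q) ^+ 2))
  | 5, 5 => Some ((q ^- 1 + q ^+ 5) / ((- 1%:R + q) ^+ 2 * (1%:R + q) ^+ 2))
  | 6, 6 => Some ((q ^- 1 + q ^+ 5) / ((- 1%:R + q) ^+ 2 * (1%:R + q) ^+ 2))
  | 7, 7 => Some ((q + q ^+ 3) / ((- 1%:R + q) ^+ 2 * (1%:R + q) ^+ 2))
  | _, _ => None end.

Definition TWt (i j : nat) : option K :=
  match i, j with
  | 0, 0 => Some (1%:R)
  | 0, 5 => Some (c - q ^+ 2 * c)
  | 1, 1 => Some (q ^+ 2)
  | 2, 2 => Some (q ^+ 2)
  | 2, 7 => Some (c - q ^+ 2 * c)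
  | 3, 3 => Some (q ^+ 2)
  | 4, 4 => Some (q ^+ 2)
  | 5, 5 => Some (q ^+ 2)
  | 6, 6 => Some (q ^+ 2)
  | 7, 7 => Some (1%:R)
  | _, _ => None end.

Definition TTt (x : nat -> nat -> K) (i j : nat) : option K :=
  match i, j with
  | 0, 0 => Some ((q ^+ 2) * x 0%N 0%N + (q ^+ 2 * c - q ^+ 4 * c) * x 0%N 5%N)
  | 0, 1 => Some ((q ^+ 4) * x 0%N 1%N)
  | 0, 2 => Some ((q ^+ 4) * x 0%N 2%N + (q ^+ 2 * c - q ^+ 4 * c) * x 0%N 7%N)
  | 0, 3 => Some ((q ^+ 4) * x 0%N 3%N)
  | 0, 4 => Some ((q ^+ 4) * x 0%N 4%N)
  | 0, 5 => Some ((q ^+ 4) * x 0%N 5%N)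
  | 0, 6 => Some ((q ^+ 4) * x 0%N 6%N)
  | 0, 7 => Some ((q ^+ 2) * x 0%N 7%N)
  | 1, 0 => Some ((q ^+ 2) * x 1%N 0%N + (q ^+ 2 * c - q ^+ 4 * c) * x 1%N 5%N)
  | 1, 1 => Some ((q ^+ 4) * x 1%N 1%N)
  | 1, 2 => Some ((q ^+ 4) * x 1%N 2%N + (q ^+ 2 * c - q ^+ 4 * c) * x 1%N 7%N)
  | 1, 3 => Some ((q ^+ 4) * x 1%N 3%N)
  | 1, 4 => Some ((q ^+ 4) * x 1%N 4%N)
  | 1, 5 => Some ((q ^+ 4) * x 1%N 5%N)
  | 1, 6 => Some ((q ^+ 4) * x 1%N 6%N)
  | 1, 7 => Some ((q ^+ 2) * x 1%N 7%N)
  | 2, 0 => Some ((q ^+ 2) * x 2%N 0%N + (q ^+ 2 * c - q ^+ 4 * c) * x 2%N 5%N)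
  | 2, 1 => Some ((q ^+ 4) * x 2%N 1%N)
  | 2, 2 => Some ((q ^+ 4) * x 2%N 2%N + (q ^+ 2 * c - q ^+ 4 * c) * x 2%N 7%N)
  | 2, 3 => Some ((q ^+ 4) * x 2%N 3%N)
  | 2, 4 => Some ((q ^+ 4) * x 2%N 4%N)
  | 2, 5 => Some ((q ^+ 4) * x 2%N 5%N)
  | 2, 6 => Some ((q ^+ 4) * x 2%N 6%N)
  | 2, 7 => Some ((q ^+ 2) * x 2%N 7%N)
  | _, _ => None end.

Definition RSt (x : nat -> nat -> K) (i j : nat) : option K :=
  match i, j with
  | 0, 0 => Some ((1%:R) * x 0%N 0%N + (- q ^- 3 * c - q ^- 1 * c + q * c + q ^+ 3 * c) * x 1%N 4%N)
  | 0, 1 => Some ((1%:R) * x 0%N 1%N)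
  | 0, 2 => Some ((1%:R) * x 0%N 2%N + (- q ^- 2 + q ^+ 2) * x 1%N 1%N)
  | 0, 3 => Some ((1%:R) * x 0%N 3%N + (q ^- 3 + q ^- 1 - q - q ^+ 3) * x 1%N 2%N + (- q ^- 3 * c - q ^- 1 * c + q * c + q ^+ 3 * c) * x 1%N 7%N + (q ^- 2 - 1%:R - q ^+ 2 + q ^+ 4) * x 2%N 1%N)
  | 0, 4 => Some ((1%:R) * x 0%N 4%N)
  | 0, 5 => Some ((1%:R) * x 0%N 5%N + (q ^- 3 + q ^- 1 - q - q ^+ 3) * x 1%N 4%N)
  | 0, 6 => Some ((1%:R) * x 0%N 6%N + (- q ^- 2 + q ^+ 2) * x 1%N 5%N + (q ^- 2 - 1%:R - q ^+ 2 + q ^+ 4) * x 2%N 4%N)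
  | 0, 7 => Some ((1%:R) * x 0%N 7%N)
  | 1, 0 => Some ((1%:R) * x 1%N 0%N + (q ^- 2 * c - q ^+ 2 * c) * x 2%N 4%N)
  | 1, 1 => Some ((1%:R) * x 1%N 1%N)
  | 1, 2 => Some ((1%:R) * x 1%N 2%N + (q ^- 1 - q) * x 2%N 1%N)
  | 1, 3 => Some ((1%:R) * x 1%N 3%N + (- q ^- 2 + q ^+ 2) * x 2%N 2%N + (q ^- 2 * c - q ^+ 2 * c) * x 2%N 7%N)
  | 1, 4 => Some ((1%:R) * x 1%N 4%N)
  | 1, 5 => Some ((1%:R) * x 1%N 5%N + (- q ^- 2 + q ^+ 2) * x 2%N 4%N)
  | 1, 6 => Some ((1%:R) * x 1%N 6%N + (q ^- 1 - q) * x 2%N 5%N)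
  | 1, 7 => Some ((1%:R) * x 1%N 7%N)
  | 2, 0 => Some ((1%:R) * x 2%N 0%N)
  | 2, 1 => Some ((1%:R) * x 2%N 1%N)
  | 2, 2 => Some ((1%:R) * x 2%N 2%N)
  | 2, 3 => Some ((1%:R) * x 2%N 3%N)
  | 2, 4 => Some ((1%:R) * x 2%N 4%N)
  | 2, 5 => Some ((1%:R) * x 2%N 5%N)
  | 2, 6 => Some ((1%:R) * x 2%N 6%N)
  | 2, 7 => Some ((1%:R) * x 2%N 7%N)
  | _, _ => None end.

Definition RMt (x : nat -> nat -> K) (i j : nat) : option K :=
  match i, j with
  | 0, 0 => Some ((1%:R) * x 0%N 0%N + (- q ^- 3 * c - q ^- 1 * c + q * c + q ^+ 3 * c) * x 1%N 4%N)
  | 0, 1 => Some ((q ^+ 2) * x 0%N 1%N)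
  | 0, 2 => Some ((1%:R) * x 0%N 2%N + (- q ^- 2 + q ^+ 2) * x 1%N 1%N)
  | 0, 3 => Some ((q ^- 2) * x 0%N 3%N + (q ^- 5 + q ^- 3 - q ^- 1 - q) * x 1%N 2%N + (- q ^- 5 * c - q ^- 3 * c + q ^- 1 * c + q * c) * x 1%N 7%N + (q ^- 4 - q ^- 2 - 1%:R + q ^+ 2) * x 2%N 1%N)
  | 0, 4 => Some ((q ^+ 2) * x 0%N 4%N)
  | 0, 5 => Some ((1%:R) * x 0%N 5%N + (q ^- 3 + q ^- 1 - q - q ^+ 3) * x 1%N 4%N)
  | 0, 6 => Some ((q ^- 2) * x 0%N 6%N + (- q ^- 4 + 1%:R) * x 1%N 5%N + (q ^- 4 - q ^- 2 - 1%:R + q ^+ 2) * x 2%N 4%N)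
  | 0, 7 => Some ((1%:R) * x 0%N 7%N)
  | 1, 0 => Some ((1%:R) * x 1%N 0%N + (q ^- 2 * c - q ^+ 2 * c) * x 2%N 4%N)
  | 1, 1 => Some ((1%:R) * x 1%N 1%N)
  | 1, 2 => Some ((1%:R) * x 1%N 2%N + (q ^- 1 - q) * x 2%N 1%N)
  | 1, 3 => Some ((1%:R) * x 1%N 3%N + (- q ^- 2 + q ^+ 2) * x 2%N 2%N + (q ^- 2 * c - q ^+ 2 * c) * x 2%N 7%N)
  | 1, 4 => Some ((1%:R) * x 1%N 4%N)
  | 1, 5 => Some ((1%:R) * x 1%N 5%N + (- q ^- 2 + q ^+ 2) * x 2%N 4%N)
  | 1, 6 => Some ((1%:R) * x 1%N 6%N + (q ^- 1 - q) * x 2%N 5%N)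
  | 1, 7 => Some ((1%:R) * x 1%N 7%N)
  | 2, 0 => Some ((1%:R) * x 2%N 0%N)
  | 2, 1 => Some ((q ^- 2) * x 2%N 1%N)
  | 2, 2 => Some ((1%:R) * x 2%N 2%N)
  | 2, 3 => Some ((q ^+ 2) * x 2%N 3%N)
  | 2, 4 => Some ((q ^- 2) * x 2%N 4%N)
  | 2, 5 => Some ((1%:R) * x 2%N 5%N)
  | 2, 6 => Some ((q ^+ 2) * x 2%N 6%N)
  | 2, 7 => Some ((1%:R) * x 2%N 7%N)
  | _, _ => None end.

Definition MWt (x : nat -> nat -> K) (i j : nat) : option K :=
  match i, j with
  | 0, 0 => Some ((q ^- 1 * c + q * c) * x 2%N 1%N + (q ^- 2 * c + c) * x 3%N 0%N)
  | 1, 0 => Some ((1%:R) * x 0%N 0%N + (q ^- 1 * c + q * c) * x 4%N 1%N + (q ^- 2 * c + c) * x 5%N 0%N)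
  | 2, 0 => Some ((1%:R) * x 0%N 1%N + (q ^- 2 * c + c) * x 6%N 0%N)
  | 3, 0 => Some ((1%:R) * x 0%N 2%N + (- q ^- 3 * c - q ^- 1 * c) * x 6%N 1%N)
  | 4, 0 => Some ((1%:R) * x 1%N 1%N + (- q ^- 2) * x 2%N 0%N + (q ^- 2 * c + c) * x 7%N 0%N)
  | 5, 0 => Some ((1%:R) * x 1%N 2%N + (q ^- 3 - q) * x 2%N 1%N + (- 1%:R) * x 3%N 0%N + (- q ^- 3 * c - q ^- 1 * c) * x 7%N 1%N)
  | 6, 0 => Some ((1%:R) * x 2%N 2%N + (- q ^- 2) * x 3%N 1%N)
  | 7, 0 => Some ((1%:R) * x 4%N 2%N + (- q ^- 2) * x 5%N 1%N + (q ^- 2) * x 6%N 0%N)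
  | _, _ => None end.

Definition FINt (x : nat -> nat -> K) (i j : nat) : option K :=
  match i, j with
  | 0, 0 => Some ((2%:R * c) * x 0%N 3%N + (2%:R * q ^- 3 * c + q ^- 1 * c - q * c) * x 1%N 2%N + (- 2%:R * q ^- 3 * c ^+ 2 + 2%:R * q * c ^+ 2) * x 1%N 7%N + (q ^- 2 * c - c) * x 2%N 1%N)
  | 1, 0 => Some ((1%:R) * x 0%N 0%N + (2%:R * c) * x 0%N 5%N + (q ^- 3 * c + q ^- 1 * c) * x 1%N 4%N)
  | 2, 0 => Some ((2%:R * c) * x 0%N 6%N + (1%:R) * x 1%N 0%N + (- 2%:R * q ^- 2 * c + 2%:R * c) * x 1%N 5%N + (q ^- 2 * c - c) * x 2%N 4%N)
  | 3, 0 => Some ((- q ^- 1 * c - q * c) * x 1%N 6%N + (1%:R) * x 2%N 0%N + (- q ^- 2 * c + c) * x 2%N 5%N)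
  | 4, 0 => Some ((- 1%:R) * x 0%N 2%N + (2%:R * c) * x 0%N 7%N + (q ^- 2) * x 1%N 1%N)
  | 5, 0 => Some ((- 1%:R) * x 0%N 3%N + (- q ^- 3 + q) * x 1%N 2%N + (q ^- 3 * c - q ^- 1 * c - 2%:R * q * c) * x 1%N 7%N + (1%:R) * x 2%N 1%N)
  | 6, 0 => Some ((- 1%:R) * x 1%N 3%N + (q ^- 2) * x 2%N 2%N + (- q ^- 2 * c + c) * x 2%N 7%N)
  | 7, 0 => Some ((1%:R) * x 0%N 6%N + (- q ^- 2) * x 1%N 5%N + (q ^- 2) * x 2%N 4%N)
  | _, _ => None end.

Lemma CVE : casimir q (mulmx (VE q)) (mulmx (VF q)) (mulmx (VK q)) (mulmx (VKi q)) 1%:M = M 3 3 CVt.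
Proof.
rewrite /casimir VEE VFE VKE VKiE idM ?(mulM, scaleM, addM).
apply: Mext => i j Hi Hj; c3 i Hi; c3 j Hj; ent.
Qed.
Lemma TVE : thetaV q = M 3 3 TVt.
Proof.
rewrite /thetaV CVE thalfE cvd01 cvd02 cvd12 cvd10 cvd20 cvd21 idM ?(mulM, scaleM, subM, addM).
apply: Mext => i j Hi Hj; c3 i Hi; c3 j Hj; ent.
Qed.
Lemma CWE : casimir q (mulmx (LieE q c)) (mulmx (LieF q c)) (mulmx (LieK q)) (mulmx (LieKi q)) 1%:M = M 8 8 CWt.
Proof.
rewrite /casimir LEE' LFE' LKE' LKiE' idM ?(mulM, scaleM, addM).
apply: Mext => i j Hi Hj; c8 i Hi; c8 j Hj; ent.
Qed.
Lemma TWE : thetaW q (LieE q c) (LieF q c) (LieK q) (LieKi q) = M 8 8 TWt.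
Proof.
rewrite /thetaW CWE thalfE cvd01 cvd02 cvd12 cvd10 cvd20 cvd21 idM ?(mulM, scaleM, subM, addM).
apply: Mext => i j Hi Hj; c8 i Hi; c8 j Hj; ent.
Qed.
Lemma TTE f : tact (thetaV q) (thetaW q (LieE q c) (LieF q c) (LieK q) (LieKi q)) (M 3 8 f) = M 3 8 (TTt (fun i j => oval (f i j))).
Proof.
rewrite /tact TVE TWE [M 3 8 f]Msome ?(mulM, trM).
apply: Mext => i j Hi Hj; c3 i Hi; c8 j Hj; ent.
Qed.
Lemma qf0 : qfact q 0 = 1. Proof. by rewrite /qfact big_geq. Qed.
Lemma qf1 : qfact q 1 = 1. Proof. rewrite /qfact big_nat1 /qint; fld. Qed.
Lemma qf2 : qfact q 2 = q + q^-1. Proof. rewrite /qfact big_nat_recr //= big_nat1 /qint; fld. Qed.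
Definition LF2t (i j : nat) : option K :=
  match i, j with
  | 3, 1 => Some (- q ^- 1 - q)
  | 6, 4 => Some (- q ^- 1 - q)
  | _, _ => None end.
Lemma LF2E : LieF q c *m LieF q c = M 8 8 LF2t.
Proof. rewrite LFE' mulM. apply: Mext => i j Hi Hj; c8 i Hi; c8 j Hj; ent. Qed.
Lemma VE3 : VE q *m (VE q *m VE q) = 0.
Proof. rewrite VEE !mulM zeroM. apply: Mext => i j Hi Hj; c3 i Hi; c3 j Hj; ent. Qed.
Lemma RSE f : \sum_(k < 5) (q ^+ 'C(k, 2) * (q - q^-1) ^+ k / qfact q k) *: tact (VE q ^+ k) (LieF q c ^+ k) (M 3 8 f)
   = M 3 8 (RSt (fun i j => oval (f i j))).
Proof.
rewrite !big_ord_recr big_ord0 /= add0r qf0 qf1 qf2 /tact.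
rewrite !exprS !expr0 -!mulmxE -!idmxE !mulmx1 VE3 !mulmx0 !mul0mx !scaler0 !addr0 LF2E.
rewrite VEE LFE' !idM [M 3 8 f]Msome ?(mulM, trM, scaleM, addM).
apply: Mext => i j Hi Hj; c3 i Hi; c8 j Hj; ent.
Qed.
Lemma RME f : Rmat q (VE q) (LieF q c) hV hW (M 3 8 f) = M 3 8 (RMt (fun i j => oval (f i j))).
Proof.
rewrite /Rmat RSE.
apply/matrixP => i j; rewrite !mxE.
case: i => [[|[|[|i]]] Hi] //; case: j => [[|[|[|[|[|[|[|[|j]]]]]]]] Hj] //; rewrite /hW /= ?big_cons ?big_nil ?hVg // /hV; ent.
Qed.
Lemma MWE f : mWV q c (M 8 3 f) = M 8 1 (MWt (fun i j => oval (f i j))).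
Proof.
rewrite /mWV [M 8 3 f]Msome !big_ord_recr !big_ord0 /= !add0r !Mentry !bvE !gvecE !clmulE' !scaleM !addM.
apply: Mext => i j Hi Hj; c8 i Hi; c1 j Hj; ent.
Qed.
Lemma FINE f : mWV q c (nbraid q (LieE q c) (LieF q c) (LieK q) (LieKi q) hW (M 3 8 f)) = M 8 1 (FINt (fun i j => oval (f i j))).
Proof.
rewrite /nbraid /braid THE TTE RME trM MWE.
apply: Mext => i j Hi Hj; c8 i Hi; c1 j Hj; ent.
Qed.
Definition IG0t (i j : nat) : option K :=
  match i, j with
  | 0, 3 => Some (c)
  | 1, 5 => Some (- c)
  | 2, 6 => Some (- c)
  | 4, 7 => Some (c)
  | _, _ => None end.

Definition IG1t (i j : nat) : option K :=
  match i, j with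
  | 0, 2 => Some (q ^- 3 * c + q ^- 1 * c)
  | 0, 7 => Some (- q ^- 3 * c ^+ 2 + q * c ^+ 2)
  | 1, 4 => Some (- q ^- 3 * c - q ^- 1 * c)
  | 2, 5 => Some (q ^- 2 * c - c)
  | 3, 6 => Some (q ^- 1 * c + q * c)
  | 5, 7 => Some (- q ^- 1 * c - q * c)
  | _, _ => None end.

Definition IG2t (i j : nat) : option K :=
  match i, j with
  | 0, 1 => Some (q ^- 2 * c)
  | 2, 4 => Some (c)
  | 3, 5 => Some (q ^- 2 * c)
  | 6, 7 => Some (c)
  | _, _ => None end.

Definition IGt (g i j : nat) : option K := match g with 0 => IG0t i j | 1 => IG1t i j | _ => IG2t i j end.

Definition DCt (i j : nat) : option K :=
  match i, j with
  | 0, 2 => Some (- q ^- 1 - q)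
  | 4, 1 => Some (- c ^- 1)
  | 5, 2 => Some (q ^- 1 * c ^- 1 + q * c ^- 1)
  | 5, 7 => Some (- q ^- 1 - q)
  | 6, 3 => Some (- c ^- 1)
  | _, _ => None end.

Definition pard (i : nat) : K := match i with 0 => 1 | 1 | 2 | 3 => -1 | 4 | 5 | 6 => 1 | _ => -1 end.
Lemma PARE : parity K = M 8 8 (fun i j => if i == j then Some (pard i) else None).
Proof.
apply/matrixP => i j; rewrite !mxE.
case: i => [[|[|[|[|[|[|[|[|i]]]]]]]] Hi] //; case: j => [[|[|[|[|[|[|[|[|j]]]]]]]] Hj] //; ent.
Qed.
Lemma IGE (g : 'I_3) : IotaGenCl q c g = M 8 8 (IGt g).
Proof.
apply/matrixP => k m; rewrite mxE /iota1Cl bv3E embVE bvE PARE mulM trM mulM FINE clmulE' subM scaleM !Mentry.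
case: g => [[|[|[|g]]] Hg] //; case: m => [[|[|[|[|[|[|[|[|m]]]]]]]] Hm] //; case: k => [k Hk]; c8 k Hk; ent.
Qed.
Hypothesis c0 : c != 0.
Lemma DCE : dCl q c = M 8 8 DCt.
Proof.
apply/matrixP => k m; rewrite mxE /gammaq !bvE !i8v // PARE ?(mulM, scaleM, addM, oppM) !clmulE' subM !Mentry.
case: m => [[|[|[|[|[|[|[|[|m]]]]]]]] Hm] //; case: k => [k Hk]; c8 k Hk; ent.
Qed.
Definition degn (i : nat) : nat := match i with 0 => 0 | 1 | 2 | 3 => 1 | 4 | 5 | 6 => 2 | _ => 3 end.
Lemma degE (k : 'I_8) : deg k = degn k.
Proof. by case: k => [[|[|[|[|[|[|[|[|k]]]]]]]] Hk]. Qed.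
Definition IGLt (g i j : nat) : option K := if (degn i).+1 == degn j then IGt g i j else None.
Lemma IGLE (g : 'I_3) : IotaGenLam q c g = M 8 8 (IGLt g).
Proof. apply/matrixP => k m; rewrite /IotaGenLam IGE !mxE !degE /IGLt. by case: ifP. Qed.
Definition DLt (i j : nat) : option K := if degn i == (degn j).+1 then DCt i j else None.
Lemma DLE : dLam q c = M 8 8 DLt.
Proof. apply/matrixP => k m; rewrite /dLam DCE !mxE !degE /DLt. by case: ifP. Qed.
Definition IOTt (x : nat -> nat -> K) (i j : nat) : option K :=
  match i, j with
  | 0, 0 => Some ((1%:R) * x 0%N 0%N)
  | 0, 1 => Some ((q ^- 2 * c) * x 3%N 0%N)
  | 0, 2 => Some ((q ^- 3 * c + q ^- 1 * c) * x 2%N 0%N)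
  | 0, 3 => Some ((c) * x 1%N 0%N)
  | 0, 4 => Some ((q ^- 3 * c ^+ 2 + q ^- 1 * c ^+ 2) * x 6%N 0%N)
  | 0, 5 => Some ((q ^- 2 * c ^+ 2) * x 5%N 0%N)
  | 0, 6 => Some ((q ^- 1 * c ^+ 2 + q * c ^+ 2) * x 4%N 0%N)
  | 0, 7 => Some ((- q ^- 3 * c ^+ 2 + q * c ^+ 2) * x 2%N 0%N + (q ^- 1 * c ^+ 3 + q * c ^+ 3) * x 7%N 0%N)
  | 1, 1 => Some ((1%:R) * x 0%N 0%N)
  | 1, 4 => Some ((- q ^- 3 * c - q ^- 1 * c) * x 2%N 0%N)
  | 1, 5 => Some ((- c) * x 1%N 0%N)
  | 1, 7 => Some ((q ^- 1 * c ^+ 2 + q * c ^+ 2) * x 4%N 0%N)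
  | 2, 2 => Some ((1%:R) * x 0%N 0%N)
  | 2, 4 => Some ((c) * x 3%N 0%N)
  | 2, 5 => Some ((q ^- 2 * c - c) * x 2%N 0%N)
  | 2, 6 => Some ((- c) * x 1%N 0%N)
  | 2, 7 => Some ((- c ^+ 2) * x 5%N 0%N)
  | 3, 3 => Some ((1%:R) * x 0%N 0%N)
  | 3, 5 => Some ((q ^- 2 * c) * x 3%N 0%N)
  | 3, 6 => Some ((q ^- 1 * c + q * c) * x 2%N 0%N)
  | 3, 7 => Some ((q ^- 1 * c ^+ 2 + q * c ^+ 2) * x 6%N 0%N)
  | 4, 4 => Some ((1%:R) * x 0%N 0%N)
  | 4, 7 => Some ((c) * x 1%N 0%N)
  | 5, 5 => Some ((1%:R) * x 0%N 0%N)
  | 5, 7 => Some ((- q ^- 1 * c - q * c) * x 2%N 0%N)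
  | 6, 6 => Some ((1%:R) * x 0%N 0%N)
  | 6, 7 => Some ((c) * x 3%N 0%N)
  | 7, 7 => Some ((1%:R) * x 0%N 0%N)
  | _, _ => None end.

Definition IOLt (x : nat -> nat -> K) (i j : nat) : option K :=
  match i, j with
  | 0, 0 => Some ((1%:R) * x 0%N 0%N)
  | 0, 1 => Some ((q ^- 2 * c) * x 3%N 0%N)
  | 0, 2 => Some ((q ^- 3 * c + q ^- 1 * c) * x 2%N 0%N)
  | 0, 3 => Some ((c) * x 1%N 0%N)
  | 0, 4 => Some ((q ^- 3 * c ^+ 2 + q ^- 1 * c ^+ 2) * x 6%N 0%N)
  | 0, 5 => Some ((q ^- 2 * c ^+ 2) * x 5%N 0%N)
  | 0, 6 => Some ((q ^- 1 * c ^+ 2 + q * c ^+ 2) * x 4%N 0%N)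
  | 0, 7 => Some ((q ^- 1 * c ^+ 3 + q * c ^+ 3) * x 7%N 0%N)
  | 1, 1 => Some ((1%:R) * x 0%N 0%N)
  | 1, 4 => Some ((- q ^- 3 * c - q ^- 1 * c) * x 2%N 0%N)
  | 1, 5 => Some ((- c) * x 1%N 0%N)
  | 1, 7 => Some ((q ^- 1 * c ^+ 2 + q * c ^+ 2) * x 4%N 0%N)
  | 2, 2 => Some ((1%:R) * x 0%N 0%N)
  | 2, 4 => Some ((c) * x 3%N 0%N)
  | 2, 5 => Some ((q ^- 2 * c - c) * x 2%N 0%N)
  | 2, 6 => Some ((- c) * x 1%N 0%N)
  | 2, 7 => Some ((- c ^+ 2) * x 5%N 0%N)
  | 3, 3 => Some ((1%:R) * x 0%N 0%N)
  | 3, 5 => Some ((q ^- 2 * c) * x 3%N 0%N)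
  | 3, 6 => Some ((q ^- 1 * c + q * c) * x 2%N 0%N)
  | 3, 7 => Some ((q ^- 1 * c ^+ 2 + q * c ^+ 2) * x 6%N 0%N)
  | 4, 4 => Some ((1%:R) * x 0%N 0%N)
  | 4, 7 => Some ((c) * x 1%N 0%N)
  | 5, 5 => Some ((1%:R) * x 0%N 0%N)
  | 5, 7 => Some ((- q ^- 1 * c - q * c) * x 2%N 0%N)
  | 6, 6 => Some ((1%:R) * x 0%N 0%N)
  | 6, 7 => Some ((c) * x 3%N 0%N)
  | 7, 7 => Some ((1%:R) * x 0%N 0%N)
  | _, _ => None end.


Lemma IOTE f : iotaCl q c (M 8 1 f) = M 8 8 (IOTt (fun i j => oval (f i j))).
Proof.
rewrite /iotaCl /iotaExt [M 8 1 f]Msome !big_ord_recr big_ord0 /= add0r !Mentry !IGE !g3v // !idM ?(mulM, scaleM, addM).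
apply: Mext => i j Hi Hj; c8 i Hi; c8 j Hj; ent.
Qed.
Lemma IOLE f : iotaLam q c (M 8 1 f) = M 8 8 (IOLt (fun i j => oval (f i j))).
Proof.
rewrite /iotaLam /iotaExt [M 8 1 f]Msome !big_ord_recr big_ord0 /= add0r !Mentry !IGLE !g3v // !idM ?(mulM, scaleM, addM).
apply: Mext => i j Hi Hj; c8 i Hi; c8 j Hj; rewrite /IGLt; ent.
Qed.
Lemma iotaExt_lin (G : 'I_3 -> 'M[K]_8) (a : K) (xi eta : 'cV[K]_8) :
  iotaExt G (a *: xi + eta) = a *: iotaExt G xi + iotaExt G eta.
Proof.
rewrite /iotaExt scaler_sumr -big_split /=; apply: eq_bigr => m _.
by rewrite !mxE scalerDl scalerA.
Qed.
Lemma iotaExt_1 (G : 'I_3 -> 'M[K]_8) : iotaExt G (bv K 0) = 1%:M.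
Proof.
rewrite /iotaExt (bigD1 ord0) //= big1 ?addr0.
  by rewrite !mxE /= scale1r.
by move=> m /negPf h; rewrite !mxE h /= scale0r.
Qed.
Let LEE0 := LEE 0 q0.
Let LFE0 := LFE 0 q0.
Let clmulE0 := clmulE 0 q0.

Lemma Cl_alg : qdiff_algebra q (LieE q c) (LieF q c) (LieK q) (LieKi q) (iotaCl q c) (dCl q c) (clmul q c) (parity K).
Proof.
split.
- split.
  + exact: (modrel c q0 hq2).
  + split.
    * move=> a xi eta; exact: iotaExt_lin.
    * exact: iotaExt_1.
    * move=> xi eta; rewrite [xi]vecM [eta]vecM clmulE0 !IOTE mulM.
      apply: Mext => i j Hi Hj; c8 i Hi; c8 j Hj; ent.
    * move=> xi; rewrite [xi]vecM LEE' LFE' LKE' LKiE' LEE0 LFE0 ?(IOTE, mulM, addM).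
      split; apply: Mext => i j Hi Hj; c8 i Hi; c8 j Hj; ent.
  + rewrite /is_equiv_differential DCE LEE' LFE' LKE' LKiE' zeroM ?(mulM).
    split; apply: Mext => i j Hi Hj; c8 i Hi; c8 j Hj; ent.
  + move=> a b e Lx xi; rewrite /Lx /xi !bvE !i8v // LEE' LFE' LKE' DCE ?(scaleM, addM, IOTE, mulM, subM).
    apply: Mext => i j Hi Hj; c8 i Hi; c8 j Hj; ent.
- exact: (modalg c q0).
- move=> a b; rewrite [a]vecM [b]vecM DCE PARE ?(clmulE', mulM, addM).
  apply: Mext => i j Hi Hj; c8 i Hi; c1 j Hj; ent.
Qed.

Lemma Lam_alg : qdiff_algebra q (LieE q 0) (LieF q 0) (LieK q) (LieKi q) (iotaLam q c) (dLam q c) (clmul q 0) (parity K).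
Proof.
split.
- split.
  + exact: (modrel 0 q0 hq2).
  + split.
    * move=> a xi eta; exact: iotaExt_lin.
    * exact: iotaExt_1.
    * move=> xi eta; rewrite [xi]vecM [eta]vecM clmulE0 !IOLE mulM.
      apply: Mext => i j Hi Hj; c8 i Hi; c8 j Hj; ent.
    * move=> xi; rewrite [xi]vecM LEE0 LFE0 LKE' LKiE' ?(IOLE, mulM, addM).
      split; apply: Mext => i j Hi Hj; c8 i Hi; c8 j Hj; ent.
  + rewrite /is_equiv_differential DLE LEE0 LFE0 LKE' LKiE' zeroM ?(mulM).
    split; apply: Mext => i j Hi Hj; c8 i Hi; c8 j Hj; rewrite /DLt; ent.
  + move=> a b e Lx xi; rewrite /Lx /xi !bvE !i8v // LEE0 LFE0 LKE' DLE ?(scaleM, addM, IOLE, mulM, subM).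
    apply: Mext => i j Hi Hj; c8 i Hi; c8 j Hj; rewrite /DLt; ent.
- exact: (modalg 0 q0).
- move=> a b; rewrite [a]vecM [b]vecM DLE PARE ?(clmulE0, mulM, addM).
  apply: Mext => i j Hi Hj; c8 i Hi; c1 j Hj; rewrite /DLt; ent.
Qed.
End B.


Unset Implicit Arguments.
Lemma nz_of_mul (K : fieldType) (x y : K) : x * y != 0 -> x != 0.
Proof. by move=> h; apply: contraNneq h => ->; rewrite mul0r. Qed.

Theorem mainTheorem6 (R : realType) (q c : (complex R))
    (hq0 : q != 0) (hq : forall n : nat, (0 < n)%N -> q ^+ n != 1)
    (hc : c != 0) :
  qdiff_algebra q (LieE q c) (LieF q c) (LieK q) (LieKi q) (iotaCl q c) (dCl q c)
                (clmul q c) (parity (complex R)) /\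
  qdiff_algebra q (LieE q 0) (LieF q 0) (LieK q) (LieKi q) (iotaLam q c) (dLam q c)
                (clmul q 0) (parity (complex R)).
Proof.
have h n : (0 < n)%N -> q ^+ n - 1 != 0 by move=> hn; rewrite subr_eq0 hq.
have hq2 : q ^+ 2 - 1 != 0 by exact: h.
have hP1 : q - 1 != 0 by rewrite -(expr1 q); exact: h.
have hP2 : q + 1 != 0.
  apply: (@nz_of_mul _ _ (q - 1)); have -> : (q + 1) * (q - 1) = q ^+ 2 - 1 by ring. exact: h.
have hP3 : q ^+ 2 + q + 1 != 0.
  apply: (@nz_of_mul _ _ (q - 1)); have -> : (q ^+ 2 + q + 1) * (q - 1) = q ^+ 3 - 1 by ring. exact: h.
have hP4 : q ^+ 2 + 1 != 0.
  apply: (@nz_of_mul _ _ (q ^+ 2 - 1)); have -> : (q ^+ 2 + 1) * (q ^+ 2 - 1) = q ^+ 4 - 1 by ring. exact: h.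
have hP6 : q ^+ 2 - q + 1 != 0.
  apply: (@nz_of_mul _ _ ((q + 1) * (q ^+ 3 - 1))); have -> : (q ^+ 2 - q + 1) * ((q + 1) * (q ^+ 3 - 1)) = q ^+ 6 - 1 by ring. exact: h.
have hP8 : q ^+ 4 + 1 != 0.
  apply: (@nz_of_mul _ _ (q ^+ 4 - 1)); have -> : (q ^+ 4 + 1) * (q ^+ 4 - 1) = q ^+ 8 - 1 by ring. exact: h.
have two0 : (2%:R : complex R) != 0 by rewrite pnatr_eq0.
split.
- by apply: Cl_alg.
- by apply: Lam_alg.
Qed.
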